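(* Let $\pi:\mathcal{B}(\ell^2)\to\mathcal{C}(\ell^2)$ be the natural quotient map onto the Calkin algebra, and let $P,Q\in\mathcal{B}(\ell^2)$ be orthogonal projections. Then $\pi(P)\le\pi(Q)$ if and only if $\mathrm{ran}(P)$ is essentially contained in $\mathrm{ran}(Q)$.
   Context: $\ell^2$ is the complex separable infinite-dimensional Hilbert space, $\mathcal{B}(\ell^2)$ the bounded operators, $\mathcal{K}(\ell^2)$ the compact operators, $\mathcal{C}(\ell^2)=\mathcal{B}(\ell^2)/\mathcal{K}(\ell^2)$ the Calkin algebra. For self-adjoint elements $a,b$ of a C*-algebra, $a\le b$ means $b-a$ is positive (i.e. $b-a=c^*c$ for some $c$ in the algebra). For closed subspaces $E,F$ of $\ell^2$, $E$ is essentially contained in $F$ if for every $\epsilon>0$ there is a closed subspace $E_0\subseteq E$ of finite codimension in $E$ such that every unit vector $v\in E_0$ satisfies $d(v,F)\le\epsilon$, where $d(v,F)$ is the distance from $v$ to $F$. *)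

(* Defs.v *)
From Stdlib Require Import Reals List.
From Coquelicot Require Import Coquelicot.
Import ListNotations.

Definition vec := nat -> C.
Definition vadd (x y : vec) : vec := fun n => Cplus (x n) (y n).
Definition vsub (x y : vec) : vec := fun n => Cminus (x n) (y n).
Definition vscal (a : C) (x : vec) : vec := fun n => Cmult a (x n).
Definition vzero : vec := fun _ => RtoC 0.

Definition in_l2 (x : vec) : Prop := ex_series (fun n => (Cmod (x n))^2).
Definition l2norm (x : vec) : R := sqrt (Series (fun n => (Cmod (x n))^2)).
Definition inner (x y : vec) : C :=
  (Series (fun n => Re (Cmult (x n) (Cconj (y n)))),
   Series (fun n => Im (Cmult (x n) (Cconj (y n))))).

(* Operators; only their values on ell^2 matter. *)
Definition operator := vec -> vec.

Definition is_bounded_op (T : operator) : Prop :=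
  (forall x, in_l2 x -> in_l2 (T x)) /\
  (forall x y, in_l2 x -> in_l2 y -> T (vadd x y) = vadd (T x) (T y)) /\
  (forall a x, in_l2 x -> T (vscal a x) = vscal a (T x)) /\
  (exists M : R, forall x, in_l2 x -> l2norm (T x) <= M * l2norm x).

Definition is_adjoint (T S : operator) : Prop :=
  forall x y, in_l2 x -> in_l2 y -> inner (T x) y = inner x (S y).

Definition is_compact_op (K : operator) : Prop :=
  is_bounded_op K /\
  forall eps : R, 0 < eps ->
    exists l : list vec, (forall u, In u l -> in_l2 u) /\
      forall x, in_l2 x -> l2norm x <= 1 ->
        exists u, In u l /\ l2norm (vsub (K x) u) < eps.

Definition is_orth_proj (P : operator) : Prop :=
  is_bounded_op P /\ (forall x, in_l2 x -> P (P x) = P x) /\ is_adjoint P P.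

(* pi(P) <= pi(Q) in the Calkin algebra: pi(Q) - pi(P) = c^* c for some c in
   C(ell^2); writing c = pi(C), this means Q - P - C^* C is compact. *)
Definition calkin_le (P Q : operator) : Prop :=
  exists (Cop Cadj K : operator),
    is_bounded_op Cop /\ is_bounded_op Cadj /\ is_adjoint Cop Cadj /\
    is_compact_op K /\
    forall x, in_l2 x -> vsub (Q x) (P x) = vadd (Cadj (Cop x)) (K x).

Definition subspace := vec -> Prop.

Definition range (P : operator) : subspace :=
  fun v => exists x, in_l2 x /\ v = P x.

Definition is_closed_subspace (E : subspace) : Prop :=
  (forall v, E v -> in_l2 v) /\
  E vzero /\
  (forall v w, E v -> E w -> E (vadd v w)) /\
  (forall a v, E v -> E (vscal a v)) /\
  (forall v, in_l2 v ->
     (forall eps : R, 0 < eps -> exists w, E w /\ l2norm (vsub v w) < eps) -> E v).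

Fixpoint lincomb (cs : list (C * vec)) : vec :=
  match cs with
  | [] => vzero
  | (a, u) :: cs' => vadd (vscal a u) (lincomb cs')
  end.

Definition finite_codim_in (E0 E : subspace) : Prop :=
  exists l : list vec, (forall u, In u l -> E u) /\
    forall v, E v -> exists cs : list (C * vec),
      (forall p, In p cs -> In (snd p) l) /\ E0 (vsub v (lincomb cs)).

Definition dist (v : vec) (F : subspace) : Rbar :=
  Glb_Rbar (fun r => exists w, F w /\ r = l2norm (vsub v w)).

Definition ess_contained (E F : subspace) : Prop :=
  forall eps : R, 0 < eps ->
    exists E0 : subspace,
      is_closed_subspace E0 /\ (forall v, E0 v -> E v) /\ finite_codim_in E0 E /\
      forall v, E0 v -> l2norm v = 1 -> Rbar_le (dist v F) eps.

(* Main.v *)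
Require Import Defs.
From Stdlib Require Import Reals List.
From Coquelicot Require Import Coquelicot.
From Stdlib Require Import Lra Psatz FunctionalExtensionality ClassicalEpsilon Classical Arith.
Import ListNotations.
Open Scope R_scope.

Definition sqv (x : vec) (n : nat) : R := (Cmod (x n))^2.

Lemma sqv_ge0 x n : 0 <= sqv x n.
Proof. unfold sqv. apply pow2_ge_0. Qed.

Lemma exR_le (a b : nat -> R) : (forall n, Rabs (a n) <= b n) -> ex_series b -> ex_series a.
Proof. intros H Hb. apply (@ex_series_le R_AbsRing R_CompleteNormedModule a b); auto. Qed.

Lemma exR_plus (a b : nat -> R) : ex_series a -> ex_series b -> ex_series (fun n => a n + b n).
Proof. intros. apply (ex_series_plus a b); auto. Qed.

Lemma exR_scal (c : R) (a : nat -> R) : ex_series a -> ex_series (fun n => c * a n).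
Proof. intros. apply (ex_series_scal_l c a); auto. Qed.

Lemma exR_ext (a b : nat -> R) : (forall n, a n = b n) -> ex_series a -> ex_series b.
Proof. intros. apply (ex_series_ext a b); auto. Qed.

Lemma Series_ge0 (a : nat -> R) : (forall n, 0 <= a n) -> ex_series a -> 0 <= Series a.
Proof.
  intros H Ha. assert (Series (fun _ => 0) <= Series a).
  { apply Series_le; auto. intros; split; [lra| auto]. }
  assert (Series (fun _ : nat => 0) = 0).
  { rewrite (Series_ext _ (fun n => 0 * a n)). rewrite Series_scal_l. ring. intros; ring. }
  lra.
Qed.

Lemma Series_le_gen (a b : nat -> R) : (forall n, a n <= b n) -> ex_series a -> ex_series b -> Series a <= Series b.
Proof.
  intros H Ha Hb. assert (0 <= Series (fun n => b n - a n)).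
  { apply Series_ge0. intros n; specialize (H n); lra.
    apply (exR_ext (fun n => b n + (-1) * a n)). intros; ring. apply exR_plus; auto. apply exR_scal; auto. }
  rewrite Series_minus in H0; auto. lra.
Qed.

Lemma amgm (t u v : R) : 0 < t -> 2 * (u * v) <= t * u^2 + v^2 / t.
Proof.
  intros Ht. assert (E: t * u^2 + v^2/t - 2*(u*v) = (t*u - v)^2 / t) by (field; lra).
  assert (0 <= (t*u - v)^2 / t). { apply Rmult_le_pos. apply pow2_ge_0. left; apply Rinv_0_lt_compat; auto. }
  lra.
Qed.

Lemma l2norm_sq x : in_l2 x -> (l2norm x)^2 = Series (sqv x).
Proof.
  intros Hx. unfold l2norm. rewrite pow2_sqrt. reflexivity.
  apply Series_ge0. apply sqv_ge0. exact Hx.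
Qed.

Lemma l2norm_ge0 x : 0 <= l2norm x.
Proof. unfold l2norm. apply sqrt_pos. Qed.

Lemma cs_real (a b S : R) : 0 <= a -> 0 <= b ->
  (forall t, 0 < t -> 2 * S <= t * a^2 + b^2 / t) -> S <= a * b.
Proof.
  intros Ha Hb H.
  apply Rnot_gt_le; intro HS.
  set (eta := (S - a*b) / (a + b + 1)).
  assert (Heta : 0 < eta). { unfold eta. apply Rdiv_lt_0_compat; lra. }
  specialize (H ((b + eta) / (a + eta))).
  assert (Ht : 0 < (b+eta)/(a+eta)) by (apply Rdiv_lt_0_compat; lra).
  specialize (H Ht).
  assert (E1 : (b + eta) / (a + eta) * a ^ 2 <= (b+eta) * a).
  { replace ((b + eta) / (a + eta) * a ^ 2) with ((b+eta) * a * (a / (a+eta))) by (field; lra).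
    assert (a / (a+eta) <= 1). { apply Rmult_le_reg_r with (a+eta). lra. field_simplify; lra. }
    assert (0 <= (b+eta)*a) by nra. nra. }
  assert (E2 : b^2 / ((b + eta) / (a + eta)) <= b * (a + eta)).
  { replace (b^2 / ((b + eta) / (a + eta))) with (b * (a+eta) * (b / (b+eta))) by (field; lra).
    assert (b / (b+eta) <= 1). { apply Rmult_le_reg_r with (b+eta). lra. field_simplify; lra. }
    assert (0 <= b*(a+eta)) by nra. nra. }
  assert (2 * S <= 2 * (a*b) + eta * (a + b)) by lra.
  assert (eta * (a + b + 1) = S - a*b) by (unfold eta; field; lra).
  nra.
Qed.

Lemma cs_series (x y : vec) (c : nat -> R) : in_l2 x -> in_l2 y ->
  (forall n, Rabs (c n) <= Cmod (x n) * Cmod (y n)) ->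
  ex_series c /\ Rabs (Series c) <= l2norm x * l2norm y.
Proof.
  intros Hx Hy Hc.
  set (p := fun n => Cmod (x n) * Cmod (y n)).
  assert (Hp0 : forall n, 0 <= p n). { intros; unfold p; apply Rmult_le_pos; apply Cmod_ge_0. }
  assert (Hpt : forall t n, 0 < t -> 2 * p n <= t * sqv x n + sqv y n / t).
  { intros t n Ht. unfold p, sqv. apply amgm; auto. }
  assert (Hexp : ex_series p).
  { apply exR_le with (fun n => 1 * sqv x n + sqv y n / 1).
    - intros n. rewrite Rabs_pos_eq; auto. specialize (Hpt 1 n ltac:(lra)). pose proof (Hp0 n). lra.
    - apply exR_plus. apply exR_scal; auto. apply (exR_ext (fun n => / 1 * sqv y n)). intros; unfold Rdiv; ring. apply exR_scal; auto. }
  assert (Hexc : ex_series c). { apply exR_le with p; auto. }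
  split; auto.
  assert (Habs : ex_series (fun n => Rabs (c n))).
  { apply exR_le with p; auto. intros; rewrite Rabs_Rabsolu; auto. }
  eapply Rle_trans. apply Series_Rabs; auto.
  eapply Rle_trans. apply Series_le with (b := p); auto. intros; split; [apply Rabs_pos| auto].
  apply cs_real. apply l2norm_ge0. apply l2norm_ge0.
  intros t Ht. rewrite (l2norm_sq x Hx), (l2norm_sq y Hy).
  assert (Hex2 : ex_series (fun n => t * sqv x n + sqv y n / t)).
  { apply exR_plus. apply exR_scal; auto. apply (exR_ext (fun n => / t * sqv y n)). intros; unfold Rdiv; ring. apply exR_scal; auto. }
  assert (2 * Series p = Series (fun n => 2 * p n)) by (rewrite Series_scal_l; auto).
  rewrite H.
  eapply Rle_trans. apply Series_le_gen with (b := fun n => t * sqv x n + sqv y n / t); auto.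
  apply exR_scal; auto.
  rewrite Series_plus; auto. rewrite Series_scal_l. 
  rewrite (Series_ext (fun n => sqv y n / t) (fun n => / t * sqv y n)). rewrite Series_scal_l. unfold Rdiv. lra.
  intros; unfold Rdiv; ring. apply exR_scal; auto.
  apply (exR_ext (fun n => / t * sqv y n)). intros; unfold Rdiv; ring. apply exR_scal; auto.
Qed.

Lemma im_le_Cmod (c : C) : Rabs (Im c) <= Cmod c.
Proof.
  pose proof (Cmod2_alt c). pose proof (Cmod_ge_0 c).
  apply Rsqr_incr_0_var. rewrite <- Rsqr_abs. unfold Rsqr. simpl in H. nra. auto.
Qed.

Definition re_n (x y : vec) n := Re (Cmult (x n) (Cconj (y n))).
Definition im_n (x y : vec) n := Im (Cmult (x n) (Cconj (y n))).

Lemma inner_eq x y : inner x y = (Series (re_n x y), Series (im_n x y)).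
Proof. reflexivity. Qed.

Lemma re_n_bound x y n : Rabs (re_n x y n) <= Cmod (x n) * Cmod (y n).
Proof. unfold re_n. rewrite <- (Cmod_conj (y n)), <- Cmod_mult. apply re_le_Cmod. Qed.
Lemma im_n_bound x y n : Rabs (im_n x y n) <= Cmod (x n) * Cmod (y n).
Proof. unfold im_n. rewrite <- (Cmod_conj (y n)), <- Cmod_mult. apply im_le_Cmod. Qed.

Lemma ex_re x y : in_l2 x -> in_l2 y -> ex_series (re_n x y).
Proof. intros; apply (cs_series x y); auto. apply re_n_bound. Qed.
Lemma ex_im x y : in_l2 x -> in_l2 y -> ex_series (im_n x y).
Proof. intros; apply (cs_series x y); auto. apply im_n_bound. Qed.

Lemma inner_re_bound x y : in_l2 x -> in_l2 y -> Rabs (fst (inner x y)) <= l2norm x * l2norm y.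
Proof. intros; apply (cs_series x y); auto. apply re_n_bound. Qed.
Lemma inner_im_bound x y : in_l2 x -> in_l2 y -> Rabs (snd (inner x y)) <= l2norm x * l2norm y.
Proof. intros; apply (cs_series x y); auto. apply im_n_bound. Qed.

Lemma sum_n_zero n : sum_n (fun _ : nat => 0) n = 0.
Proof. induction n. rewrite sum_O; auto. rewrite sum_Sn, IHn. unfold plus; simpl; ring. Qed.

Lemma ex_series_zero : ex_series (fun _ : nat => 0).
Proof.
  exists 0. unfold is_series. apply (filterlim_ext (fun _ => 0)). intros; rewrite sum_n_zero; auto.
  apply filterlim_const.
Qed.

Lemma Series_zero : Series (fun _ : nat => 0) = 0.
Proof. rewrite (Series_ext _ (fun n => 0 * 0)). rewrite Series_scal_l with (a := fun _ => 0). ring. intros; ring. Qed.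

Ltac cdes := repeat match goal with |- context [?f ?n] => (match type of (f n) with C => let a := fresh "a" in let b := fresh "b" in destruct (f n) as [a b] end) end.

Lemma sqv_eq x n : sqv x n = fst (x n) ^ 2 + snd (x n) ^ 2.
Proof. unfold sqv. rewrite Cmod2_alt. reflexivity. Qed.

Lemma re_n_add_l x y z n : re_n (vadd x y) z n = re_n x z n + re_n y z n.
Proof. unfold re_n, vadd. destruct (x n), (y n), (z n). simpl. ring. Qed.
Lemma im_n_add_l x y z n : im_n (vadd x y) z n = im_n x z n + im_n y z n.
Proof. unfold im_n, vadd. destruct (x n), (y n), (z n). simpl. ring. Qed.
Lemma re_n_sub_l x y z n : re_n (vsub x y) z n = re_n x z n - re_n y z n.
Proof. unfold re_n, vsub. destruct (x n), (y n), (z n). simpl. ring. Qed.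
Lemma im_n_sub_l x y z n : im_n (vsub x y) z n = im_n x z n - im_n y z n.
Proof. unfold im_n, vsub. destruct (x n), (y n), (z n). simpl. ring. Qed.
Lemma re_n_scal_l a x z n : re_n (vscal a x) z n = fst a * re_n x z n - snd a * im_n x z n.
Proof. unfold re_n, im_n, vscal. destruct a, (x n), (z n). simpl. ring. Qed.
Lemma im_n_scal_l a x z n : im_n (vscal a x) z n = fst a * im_n x z n + snd a * re_n x z n.
Proof. unfold re_n, im_n, vscal. destruct a, (x n), (z n). simpl. ring. Qed.
Lemma re_n_sym x y n : re_n y x n = re_n x y n.
Proof. unfold re_n. destruct (x n), (y n). simpl. ring. Qed.
Lemma im_n_sym x y n : im_n y x n = - im_n x y n.
Proof. unfold im_n. destruct (x n), (y n). simpl. ring. Qed.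
Lemma re_n_self x n : re_n x x n = sqv x n.
Proof. rewrite sqv_eq. unfold re_n. destruct (x n). simpl. ring. Qed.
Lemma im_n_self x n : im_n x x n = 0.
Proof. unfold im_n. destruct (x n). simpl. ring. Qed.

Lemma in_l2_zero : in_l2 vzero.
Proof. unfold in_l2. apply exR_ext with (fun _ => 0). intros; unfold vzero. rewrite Cmod_0. simpl; ring. apply ex_series_zero. Qed.

Lemma in_l2_add x y : in_l2 x -> in_l2 y -> in_l2 (vadd x y).
Proof.
  intros Hx Hy. unfold in_l2. apply exR_le with (fun n => 2 * sqv x n + 2 * sqv y n).
  - intros n. fold (sqv (vadd x y) n). rewrite Rabs_pos_eq by apply sqv_ge0. rewrite !sqv_eq.
    unfold vadd. destruct (x n) as [p q], (y n) as [u v]. simpl.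
    pose proof (pow2_ge_0 (p - u)). pose proof (pow2_ge_0 (q - v)). pose proof (pow2_ge_0 (p + u)). pose proof (pow2_ge_0 (q + v)). simpl in *. nra.
  - apply exR_plus; apply exR_scal; auto.
Qed.

Lemma in_l2_sub x y : in_l2 x -> in_l2 y -> in_l2 (vsub x y).
Proof.
  intros Hx Hy. unfold in_l2. apply exR_le with (fun n => 2 * sqv x n + 2 * sqv y n).
  - intros n. fold (sqv (vsub x y) n). rewrite Rabs_pos_eq by apply sqv_ge0. rewrite !sqv_eq.
    unfold vsub. destruct (x n) as [p q], (y n) as [u v]. simpl.
    pose proof (pow2_ge_0 (p - u)). pose proof (pow2_ge_0 (q - v)). pose proof (pow2_ge_0 (p + u)). pose proof (pow2_ge_0 (q + v)). simpl in *. nra.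
  - apply exR_plus; apply exR_scal; auto.
Qed.

Lemma sqv_scal a x n : sqv (vscal a x) n = (Cmod a)^2 * sqv x n.
Proof. rewrite !sqv_eq, Cmod2_alt. unfold vscal. destruct a, (x n). simpl. ring. Qed.

Lemma in_l2_scal a x : in_l2 x -> in_l2 (vscal a x).
Proof.
  intros Hx. unfold in_l2. apply exR_ext with (fun n => (Cmod a)^2 * sqv x n).
  intros; rewrite <- sqv_scal; reflexivity. apply exR_scal; auto.
Qed.

Lemma inner_add_l x y z : in_l2 x -> in_l2 y -> in_l2 z ->
  inner (vadd x y) z = Cplus (inner x z) (inner y z).
Proof.
  intros. rewrite !inner_eq. unfold Cplus; simpl. f_equal.
  - rewrite <- Series_plus by (apply ex_re; auto). apply Series_ext. apply re_n_add_l.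
  - rewrite <- Series_plus by (apply ex_im; auto). apply Series_ext. apply im_n_add_l.
Qed.

Lemma inner_sub_l x y z : in_l2 x -> in_l2 y -> in_l2 z ->
  inner (vsub x y) z = Cminus (inner x z) (inner y z).
Proof.
  intros. rewrite !inner_eq. unfold Cminus, Cplus, Copp; simpl. f_equal.
  - unfold Rminus. rewrite <- Series_opp. rewrite <- Series_plus. apply Series_ext. intros; rewrite re_n_sub_l; ring.
    apply ex_re; auto. apply exR_ext with (fun n => -1 * re_n y z n). intros; ring. apply exR_scal. apply ex_re; auto.
  - unfold Rminus. rewrite <- Series_opp. rewrite <- Series_plus. apply Series_ext. intros; rewrite im_n_sub_l; ring.
    apply ex_im; auto. apply exR_ext with (fun n => -1 * im_n y z n). intros; ring. apply exR_scal. apply ex_im; auto.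
Qed.

Lemma inner_scal_l a x z : in_l2 x -> in_l2 z ->
  inner (vscal a x) z = Cmult a (inner x z).
Proof.
  intros. rewrite !inner_eq. destruct a as [a1 a2]. unfold Cmult; simpl. f_equal.
  - unfold Rminus. rewrite <- (Series_scal_l a1), <- (Series_scal_l a2), <- Series_opp, <- Series_plus.
    apply Series_ext. intros; rewrite re_n_scal_l; simpl; ring.
    apply exR_scal, ex_re; auto.
    apply exR_ext with (fun n => (- a2) * im_n x z n). intros; ring. apply exR_scal, ex_im; auto.
  - rewrite <- (Series_scal_l a1), <- (Series_scal_l a2), <- Series_plus.
    apply Series_ext. intros; rewrite im_n_scal_l; simpl; ring.
    apply exR_scal, ex_im; auto. apply exR_scal, ex_re; auto.
Qed.

Lemma inner_sym x y : inner y x = Cconj (inner x y).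
Proof.
  rewrite !inner_eq. unfold Cconj; simpl. f_equal.
  apply Series_ext; intros; apply re_n_sym.
  rewrite <- Series_opp. apply Series_ext; intros; apply im_n_sym.
Qed.

Lemma inner_self x : in_l2 x -> inner x x = RtoC (l2norm x ^ 2).
Proof.
  intros. rewrite inner_eq, l2norm_sq by auto. unfold RtoC. f_equal.
  apply Series_ext; intros; apply re_n_self.
  rewrite <- Series_zero. apply Series_ext; intros; apply im_n_self.
Qed.

Lemma inner_add_r x y z : in_l2 x -> in_l2 y -> in_l2 z ->
  inner z (vadd x y) = Cplus (inner z x) (inner z y).
Proof.
  intros. rewrite (inner_sym (vadd x y)), inner_add_l by auto.
  rewrite (inner_sym x z), (inner_sym y z). destruct (inner x z), (inner y z). unfold Cconj, Cplus; simpl. f_equal; ring.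
Qed.
Lemma inner_sub_r x y z : in_l2 x -> in_l2 y -> in_l2 z ->
  inner z (vsub x y) = Cminus (inner z x) (inner z y).
Proof.
  intros. rewrite (inner_sym (vsub x y)), inner_sub_l by auto.
  rewrite (inner_sym x z), (inner_sym y z). destruct (inner x z), (inner y z). unfold Cconj, Cminus, Cplus, Copp; simpl. f_equal; ring.
Qed.
Lemma inner_scal_r a x z : in_l2 x -> in_l2 z ->
  inner z (vscal a x) = Cmult (Cconj a) (inner z x).
Proof.
  intros. rewrite (inner_sym (vscal a x)), inner_scal_l by auto.
  rewrite (inner_sym x z). destruct (inner x z), a. unfold Cconj, Cmult; simpl. f_equal; ring.
Qed.

Definition ip (x y : vec) : R := fst (inner x y).

Lemma ip_self x : in_l2 x -> ip x x = l2norm x ^ 2.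
Proof. intros; unfold ip; rewrite inner_self; auto. Qed.
Lemma ip_sym x y : ip y x = ip x y.
Proof. unfold ip; rewrite inner_sym. destruct (inner x y); reflexivity. Qed.
Lemma ip_cs x y : in_l2 x -> in_l2 y -> ip x y <= l2norm x * l2norm y.
Proof. intros. unfold ip. pose proof (inner_re_bound x y H H0). apply Rabs_le_between in H1; lra. Qed.
Lemma ip_cs_abs x y : in_l2 x -> in_l2 y -> Rabs (ip x y) <= l2norm x * l2norm y.
Proof. intros. apply inner_re_bound; auto. Qed.
Lemma ip_add_l x y z : in_l2 x -> in_l2 y -> in_l2 z -> ip (vadd x y) z = ip x z + ip y z.
Proof. intros; unfold ip; rewrite inner_add_l; auto. Qed.
Lemma ip_sub_l x y z : in_l2 x -> in_l2 y -> in_l2 z -> ip (vsub x y) z = ip x z - ip y z.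
Proof. intros; unfold ip; rewrite inner_sub_l; auto. Qed.
Lemma ip_add_r x y z : in_l2 x -> in_l2 y -> in_l2 z -> ip z (vadd x y) = ip z x + ip z y.
Proof. intros; unfold ip; rewrite inner_add_r; auto. Qed.
Lemma ip_sub_r x y z : in_l2 x -> in_l2 y -> in_l2 z -> ip z (vsub x y) = ip z x - ip z y.
Proof. intros; unfold ip; rewrite inner_sub_r; auto. Qed.
Lemma ip_scalR_l (r : R) x z : in_l2 x -> in_l2 z -> ip (vscal (RtoC r) x) z = r * ip x z.
Proof. intros; unfold ip; rewrite inner_scal_l; auto. unfold Cmult, RtoC; simpl. ring. Qed.
Lemma ip_scalR_r (r : R) x z : in_l2 x -> in_l2 z -> ip z (vscal (RtoC r) x) = r * ip z x.
Proof. intros; unfold ip; rewrite inner_scal_r; auto. unfold Cmult, Cconj, RtoC; simpl. ring. Qed.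

Lemma term_le_Series (a : nat -> R) n : (forall k, 0 <= a k) -> ex_series a -> a n <= Series a.
Proof.
  intros H Ha. rewrite (Series_incr_n a (S n)) by (auto with arith).
  simpl pred.
  assert (0 <= Series (fun k => a (S n + k)%nat)).
  { apply Series_ge0; auto. apply (ex_series_incr_n a (S n)); auto. }
  assert (a n <= sum_f_R0 a n).
  { destruct n. simpl; lra. simpl. pose proof (cond_pos_sum a n H). lra. }
  lra.
Qed.

Lemma l2norm_zero x : in_l2 x -> l2norm x = 0 -> x = vzero.
Proof.
  intros Hx H0. pose proof (l2norm_sq x Hx). rewrite H0 in H. 
  apply functional_extensionality. intros n.
  assert (sqv x n <= 0). { pose proof (term_le_Series (sqv x) n (sqv_ge0 x) Hx). simpl in H. lra. }
  pose proof (sqv_ge0 x n). assert (sqv x n = 0) by lra.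
  unfold sqv in H3. assert (Cmod (x n) = 0) by (pose proof (Cmod_ge_0 (x n)); nra). clear H3. rename H4 into H3. apply Cmod_eq_0 in H3. rewrite H3. reflexivity.
Qed.

Lemma l2norm_scal a x : in_l2 x -> l2norm (vscal a x) = Cmod a * l2norm x.
Proof.
  intros Hx. unfold l2norm.
  rewrite (Series_ext _ (fun n => (Cmod a)^2 * sqv x n)) by (intros; rewrite <- sqv_scal; reflexivity).
  rewrite Series_scal_l. rewrite sqrt_mult_alt by (apply pow2_ge_0).
  rewrite sqrt_pow2 by (apply Cmod_ge_0). reflexivity.
Qed.

Lemma vzero_eq : vzero = vscal (RtoC 0) vzero.
Proof. apply functional_extensionality; intros; unfold vzero, vscal. unfold Cmult, RtoC; simpl; f_equal; ring. Qed.

Lemma l2norm_vzero : l2norm vzero = 0.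
Proof. rewrite vzero_eq, l2norm_scal by apply in_l2_zero. rewrite Cmod_0. ring. Qed.

Lemma l2norm_add_sq x y : in_l2 x -> in_l2 y ->
  l2norm (vadd x y) ^ 2 = l2norm x ^ 2 + 2 * ip x y + l2norm y ^ 2.
Proof.
  intros. assert (in_l2 (vadd x y)) by (apply in_l2_add; auto).
  rewrite <- !ip_self by auto. rewrite ip_add_l, !ip_add_r by auto. rewrite (ip_sym x y). ring.
Qed.

Lemma l2norm_sub_sq x y : in_l2 x -> in_l2 y ->
  l2norm (vsub x y) ^ 2 = l2norm x ^ 2 - 2 * ip x y + l2norm y ^ 2.
Proof.
  intros. assert (in_l2 (vsub x y)) by (apply in_l2_sub; auto).
  rewrite <- !ip_self by auto. rewrite ip_sub_l, !ip_sub_r by auto. rewrite (ip_sym x y). ring.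
Qed.

Lemma sq_le_nonneg a b : 0 <= a -> 0 <= b -> a^2 <= b^2 -> a <= b.
Proof. intros. nra. Qed.

Lemma l2tri x y : in_l2 x -> in_l2 y -> l2norm (vadd x y) <= l2norm x + l2norm y.
Proof.
  intros. apply sq_le_nonneg. apply l2norm_ge0. pose proof (l2norm_ge0 x); pose proof (l2norm_ge0 y); lra.
  rewrite l2norm_add_sq by auto. pose proof (ip_cs x y H H0). nra.
Qed.

Lemma l2tri_sub x y : in_l2 x -> in_l2 y -> l2norm (vsub x y) <= l2norm x + l2norm y.
Proof.
  intros. apply sq_le_nonneg. apply l2norm_ge0. pose proof (l2norm_ge0 x); pose proof (l2norm_ge0 y); lra.
  rewrite l2norm_sub_sq by auto. pose proof (ip_cs_abs x y H H0). apply Rabs_le_between in H1. nra.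
Qed.

Lemma vsub_split x y z : vsub x z = vadd (vsub x y) (vsub y z).
Proof. apply functional_extensionality; intros; unfold vsub, vadd. ring. Qed.

Lemma l2tri3 x y z : in_l2 x -> in_l2 y -> in_l2 z ->
  l2norm (vsub x z) <= l2norm (vsub x y) + l2norm (vsub y z).
Proof. intros. rewrite (vsub_split x y z). apply l2tri; apply in_l2_sub; auto. Qed.

Lemma vsub_sym_norm x y : in_l2 x -> in_l2 y -> l2norm (vsub x y) = l2norm (vsub y x).
Proof.
  intros. replace (vsub x y) with (vscal (RtoC (-1)) (vsub y x)).
  rewrite l2norm_scal by (apply in_l2_sub; auto). rewrite Cmod_R. replace (Rabs (-1)) with 1 by (rewrite Rabs_left; lra). ring.
  apply functional_extensionality; intros; unfold vsub, vscal. unfold RtoC. destruct (x x0), (y x0). unfold Cmult, Cminus, Cplus, Copp; simpl. f_equal; ring.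
Qed.

Lemma bop_l2 T x : is_bounded_op T -> in_l2 x -> in_l2 (T x).
Proof. intros [H _]; auto. Qed.
Lemma bop_add T x y : is_bounded_op T -> in_l2 x -> in_l2 y -> T (vadd x y) = vadd (T x) (T y).
Proof. intros (_&H&_); auto. Qed.
Lemma bop_scal T a x : is_bounded_op T -> in_l2 x -> T (vscal a x) = vscal a (T x).
Proof. intros (_&_&H&_); auto. Qed.
Lemma bop_zero T : is_bounded_op T -> T vzero = vzero.
Proof.
  intros HT. rewrite vzero_eq. rewrite bop_scal by (auto; apply in_l2_zero).
  apply functional_extensionality; intros; unfold vscal. unfold Cmult, RtoC; simpl. unfold vzero, RtoC; f_equal; ring.
Qed.
Lemma vsub_as x y : vsub x y = vadd x (vscal (RtoC (-1)) y).
Proof. apply functional_extensionality; intros; unfold vsub, vadd, vscal. unfold RtoC. destruct (x x0), (y x0). unfold Cmult, Cminus, Cplus, Copp; simpl. f_equal; ring. Qed.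
Lemma bop_sub T x y : is_bounded_op T -> in_l2 x -> in_l2 y -> T (vsub x y) = vsub (T x) (T y).
Proof.
  intros. rewrite !vsub_as. rewrite bop_add, bop_scal; auto. apply in_l2_scal; auto.
Qed.
Lemma bop_bound T : is_bounded_op T -> exists M, 0 <= M /\ forall x, in_l2 x -> l2norm (T x) <= M * l2norm x.
Proof.
  intros (_&_&_&M&HM). exists (Rmax M 0). split. apply Rmax_r.
  intros x Hx. eapply Rle_trans. apply HM; auto. apply Rmult_le_compat_r. apply l2norm_ge0. apply Rmax_l.
Qed.

Lemma proj_norm P x : is_orth_proj P -> in_l2 x -> l2norm (P x) <= l2norm x.
Proof.
  intros (HB & Hid & Hadj) Hx. assert (HPx : in_l2 (P x)) by (apply bop_l2; auto).
  assert (l2norm (P x) ^ 2 <= l2norm x * l2norm (P x)).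
  { rewrite <- ip_self by auto. unfold ip. rewrite Hadj by auto. rewrite Hid by auto. apply ip_cs; auto. }
  pose proof (l2norm_ge0 (P x)); pose proof (l2norm_ge0 x). nra.
Qed.

Lemma ip_adj T S x y : is_adjoint T S -> in_l2 x -> in_l2 y -> ip (T x) y = ip x (S y).
Proof. intros H ? ?; unfold ip; rewrite H; auto. Qed.

Ltac vext := apply functional_extensionality; intro; unfold vadd, vsub, vscal, vzero.

Lemma bop_id : is_bounded_op (fun x => x).
Proof.
  repeat split; auto. exists 1. intros; lra.
Qed.

Lemma bop_comp A B : is_bounded_op A -> is_bounded_op B -> is_bounded_op (fun x => A (B x)).
Proof.
  intros HA HB. destruct (bop_bound A HA) as (MA & HMA & HA').
  destruct (bop_bound B HB) as (MB & HMB & HB').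
  repeat split.
  - intros. apply (bop_l2 A); auto. apply (bop_l2 B); auto.
  - intros. rewrite (bop_add B), (bop_add A); auto; apply bop_l2; auto.
  - intros. rewrite (bop_scal B), (bop_scal A); auto; apply bop_l2; auto.
  - exists (MA * MB). intros x Hx. eapply Rle_trans. apply HA'. apply bop_l2; auto.
    rewrite Rmult_assoc. apply Rmult_le_compat_l; auto.
Qed.

Lemma bop_vsub A B : is_bounded_op A -> is_bounded_op B -> is_bounded_op (fun x => vsub (A x) (B x)).
Proof.
  intros HA HB. destruct (bop_bound A HA) as (MA & HMA & HA').
  destruct (bop_bound B HB) as (MB & HMB & HB').
  repeat split.
  - intros; apply in_l2_sub; apply bop_l2; auto.
  - intros. rewrite (bop_add B), (bop_add A); auto. vext. ring.
  - intros. rewrite (bop_scal B), (bop_scal A); auto. vext. ring.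
  - exists (MA + MB). intros x Hx. eapply Rle_trans. apply l2tri_sub; apply bop_l2; auto.
    pose proof (HA' x Hx); pose proof (HB' x Hx). lra.
Qed.

Lemma bop_vadd A B : is_bounded_op A -> is_bounded_op B -> is_bounded_op (fun x => vadd (A x) (B x)).
Proof.
  intros HA HB. destruct (bop_bound A HA) as (MA & HMA & HA').
  destruct (bop_bound B HB) as (MB & HMB & HB').
  repeat split.
  - intros; apply in_l2_add; apply bop_l2; auto.
  - intros. rewrite (bop_add B), (bop_add A); auto. vext. ring.
  - intros. rewrite (bop_scal B), (bop_scal A); auto. vext. ring.
  - exists (MA + MB). intros x Hx. eapply Rle_trans. apply l2tri; apply bop_l2; auto.
    pose proof (HA' x Hx); pose proof (HB' x Hx). lra.
Qed.

Lemma bop_scalop c A : is_bounded_op A -> is_bounded_op (fun x => vscal c (A x)).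
Proof.
  intros HA. destruct (bop_bound A HA) as (MA & HMA & HA').
  repeat split.
  - intros; apply in_l2_scal; apply bop_l2; auto.
  - intros. rewrite (bop_add A); auto. vext. ring.
  - intros. rewrite (bop_scal A); auto. vext. ring.
  - exists (Cmod c * MA). intros x Hx. rewrite l2norm_scal by (apply bop_l2; auto).
    rewrite Rmult_assoc. apply Rmult_le_compat_l; auto. apply Cmod_ge_0.
Qed.

Lemma vsub_self x : vsub x x = vzero.
Proof. vext. ring. Qed.
Lemma vsub_zero_r x : vsub x vzero = x.
Proof. vext. ring. Qed.
Lemma vsub_eq0 x y : vsub x y = vzero -> x = y.
Proof.
  intros H. apply functional_extensionality; intro n. apply (f_equal (fun f => f n)) in H.
  unfold vsub, vzero in H. replace (x n) with (Cplus (Cminus (x n) (y n)) (y n)) by ring. rewrite H. ring.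
Qed.

Lemma inner_zero_l u : in_l2 u -> inner vzero u = RtoC 0.
Proof. intros. rewrite vzero_eq, inner_scal_l by (auto; apply in_l2_zero). ring. Qed.
Lemma ip_zero_l u : in_l2 u -> ip vzero u = 0.
Proof. intros; unfold ip; rewrite inner_zero_l; auto. Qed.
Lemma ip_zero_r u : in_l2 u -> ip u vzero = 0.
Proof. intros; rewrite ip_sym; apply ip_zero_l; auto. Qed.

Lemma finite_codim_ext (A A' E : subspace) : (forall v, A v -> A' v) -> finite_codim_in A E -> finite_codim_in A' E.
Proof.
  intros H (l & Hl & Hd). exists l. split; auto. intros v Hv. destruct (Hd v Hv) as (cs & Hcs & HA).
  exists cs; auto.
Qed.

Lemma codim_step (E E1 : subspace) (g : vec -> C) :
  finite_codim_in E1 E ->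
  (forall v, E1 v -> E v) ->
  (forall v w, E1 v -> E1 w -> E1 (vadd v w)) ->
  (forall a v, E1 v -> E1 (vscal a v)) ->
  (forall v w, E1 v -> E1 w -> g (vadd v w) = Cplus (g v) (g w)) ->
  (forall a v, E1 v -> g (vscal a v) = Cmult a (g v)) ->
  finite_codim_in (fun v => E1 v /\ g v = RtoC 0) E.
Proof.
  intros (l & Hl & Hd) HE1E Hadd Hscal Hgadd Hgscal.
  destruct (classic (exists z, E1 z /\ g z <> RtoC 0)) as [(z & Hz & Hgz) | Hno].
  - exists (z :: l). split.
    + intros u [<- | Hu]; auto.
    + intros v Hv. destruct (Hd v Hv) as (cs & Hcs & Hr).
      set (r := vsub v (lincomb cs)) in *.
      set (c := Cdiv (g r) (g z)).
      exists ((c, z) :: cs). split.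
      * intros p [<- | Hp]. simpl; auto. right; apply Hcs; auto.
      * assert (Heq : vsub v (lincomb ((c, z) :: cs)) = vadd r (vscal (Copp c) z)).
        { simpl. unfold r. vext. ring. }
        rewrite Heq. split.
        -- apply Hadd; auto.
        -- rewrite Hgadd, Hgscal; auto. unfold c. field. auto.
  - exists l. split; auto. intros v Hv. destruct (Hd v Hv) as (cs & Hcs & Hr).
    exists cs. split; auto. split; auto. apply NNPP; intro Hn. apply Hno. eauto.
Qed.

Lemma range_l2 P v : is_bounded_op P -> range P v -> in_l2 v.
Proof. intros HP (x & Hx & ->). apply bop_l2; auto. Qed.
Lemma range_fix P v : is_orth_proj P -> range P v -> P v = v.
Proof. intros (HB & Hid & _) (x & Hx & ->). apply Hid; auto. Qed.
Lemma range_zero P : is_bounded_op P -> range P vzero.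
Proof. intros HP. exists vzero. split. apply in_l2_zero. rewrite bop_zero; auto. Qed.
Lemma range_add P v w : is_bounded_op P -> range P v -> range P w -> range P (vadd v w).
Proof. intros HP (x & Hx & ->) (y & Hy & ->). exists (vadd x y). split. apply in_l2_add; auto. rewrite bop_add; auto. Qed.
Lemma range_scal P a v : is_bounded_op P -> range P v -> range P (vscal a v).
Proof. intros HP (x & Hx & ->). exists (vscal a x). split. apply in_l2_scal; auto. rewrite bop_scal; auto. Qed.
Lemma range_of P x : in_l2 x -> range P (P x).
Proof. intros; exists x; auto. Qed.

Lemma small_zero (a c : R) : 0 <= c -> (forall eps, 0 < eps -> Rabs a <= c * eps) -> a = 0.
Proof.
  intros Hc H. destruct (Req_dec a 0) as [|Hne]; auto. exfalso.
  assert (Ha : 0 < Rabs a) by (apply Rabs_pos_lt; auto).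
  specialize (H (Rabs a / (2 * (c + 1))) ltac:(apply Rdiv_lt_0_compat; lra)).
  assert (c * (Rabs a / (2 * (c + 1))) < Rabs a).
  { replace (c * (Rabs a / (2 * (c + 1)))) with (Rabs a * (c / (2 * (c+1)))) by (field; lra).
    assert (c / (2 * (c + 1)) < 1). { apply Rmult_lt_reg_r with (2 * (c+1)). lra. field_simplify; lra. }
    nra. }
  lra.
Qed.

Lemma range_closed P v : is_orth_proj P -> in_l2 v ->
  (forall eps, 0 < eps -> exists w, range P w /\ l2norm (vsub v w) < eps) -> range P v.
Proof.
  intros HP Hv H. destruct HP as (HB & Hid & Hadj) eqn:HPe.
  assert (HPv : in_l2 (P v)) by (apply bop_l2; auto).
  assert (l2norm (vsub (P v) v) = 0).
  { apply (small_zero _ 2). lra. intros eps Heps. destruct (H eps Heps) as (w & Hw & Hvw).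
    rewrite Rabs_pos_eq by apply l2norm_ge0.
    assert (Hwl : in_l2 w) by (eapply range_l2; eauto).
    assert (HPw : P w = w) by (apply range_fix; auto).
    eapply Rle_trans. apply (l2tri3 _ w); auto.
    replace (vsub (P v) w) with (P (vsub v w)) by (rewrite bop_sub, HPw; auto).
    pose proof (proj_norm P (vsub v w) HP ltac:(apply in_l2_sub; auto)).
    rewrite (vsub_sym_norm w v) by auto. lra. }
  apply l2norm_zero in H0. apply vsub_eq0 in H0. exists v. split; auto.
  apply in_l2_sub; auto.
Qed.

Lemma dist_le v F w : F w -> Rbar_le (Defs.dist v F) (l2norm (vsub v w)).
Proof.
  intros Hw. unfold Defs.dist. destruct (Glb_Rbar_correct (fun r => exists w, F w /\ r = l2norm (vsub v w))) as [Hlb _].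
  apply Hlb. exists w; auto.
Qed.

Lemma pow4_le a e : 0 <= a -> 0 <= e -> a^4 <= e^4 -> a <= e.
Proof.
  intros. apply sq_le_nonneg; auto. apply sq_le_nonneg. nra. nra.
  replace ((a^2)^2) with (a^4) by ring. replace ((e^2)^2) with (e^4) by ring. auto.
Qed.

Section Fwd.
Variables P Q Cop Cadj K : operator.
Hypothesis HP : is_orth_proj P.
Hypothesis HQ : is_orth_proj Q.
Hypothesis HCop : is_bounded_op Cop.
Hypothesis HCadj : is_bounded_op Cadj.
Hypothesis Hadj : is_adjoint Cop Cadj.
Hypothesis HKb : is_bounded_op K.
Hypothesis Hid : forall x, in_l2 x -> vsub (Q x) (P x) = vadd (Cadj (Cop x)) (K x).

Lemma key_ineq v : in_l2 v -> P v = v ->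
  l2norm (vsub v (Q v)) ^ 4 <= l2norm v ^ 2 * l2norm (K (vsub v (Q v))) * l2norm (vsub v (Q v)).
Proof.
  intros Hv HPv. destruct HP as (HPb & HPid & HPadj). destruct HQ as (HQb & HQid & HQadj).
  set (w := vsub v (Q v)).
  assert (HQv : in_l2 (Q v)) by (apply bop_l2; auto).
  assert (Hw : in_l2 w) by (apply in_l2_sub; auto).
  assert (HQw : Q w = vzero). { unfold w. rewrite bop_sub, HQid by auto. apply vsub_self. }
  assert (HPw : in_l2 (P w)) by (apply bop_l2; auto).
  assert (HKw : in_l2 (K w)) by (apply bop_l2; auto).
  assert (HCw : in_l2 (Cop w)) by (apply bop_l2; auto).
  assert (HCCw : in_l2 (Cadj (Cop w))) by (apply bop_l2; auto).
  pose proof (Hid w Hw) as E.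
  assert (E2 : ip (vsub (Q w) (P w)) w = ip (vadd (Cadj (Cop w)) (K w)) w) by (rewrite E; auto).
  rewrite ip_sub_l, ip_add_l in E2 by (auto; apply bop_l2; auto).
  rewrite HQw, ip_zero_l in E2 by auto.
  assert (E3 : ip (P w) w = l2norm (P w) ^ 2).
  { rewrite <- ip_self by auto. rewrite (ip_adj P P w (P w)) by auto. rewrite HPid by auto.
    apply ip_adj; auto. }
  assert (E4 : ip (Cadj (Cop w)) w = l2norm (Cop w) ^ 2).
  { rewrite <- ip_self by auto. rewrite ip_sym. rewrite <- (ip_adj Cop Cadj) by auto. reflexivity. }
  assert (E5 : l2norm (P w) ^ 2 <= l2norm (K w) * l2norm w).
  { pose proof (ip_cs_abs (K w) w HKw Hw). apply Rabs_le_between in H. pose proof (pow2_ge_0 (l2norm (Cop w))). lra. }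
  assert (E6 : l2norm w ^ 2 <= l2norm v * l2norm (P w)).
  { rewrite <- ip_self by auto. unfold w at 1. rewrite ip_sub_l by auto.
    rewrite (ip_adj Q Q v w) by auto. rewrite HQw, ip_zero_r by auto.
    rewrite <- HPv at 1. rewrite (ip_adj P P v w) by auto. rewrite Rminus_0_r. apply ip_cs; auto. }
  pose proof (l2norm_ge0 w). pose proof (l2norm_ge0 v). pose proof (l2norm_ge0 (P w)). pose proof (l2norm_ge0 (K w)).
  assert (l2norm w ^ 4 <= (l2norm v * l2norm (P w))^2).
  { replace (l2norm w ^ 4) with ((l2norm w ^2)^2) by ring. apply pow_incr. split; auto. apply pow2_ge_0. }
  assert ((l2norm v * l2norm (P w))^2 = l2norm v ^ 2 * l2norm (P w) ^ 2) by ring.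
  assert (l2norm v ^ 2 * l2norm (P w) ^ 2 <= l2norm v ^ 2 * (l2norm (K w) * l2norm w)).
  { apply Rmult_le_compat_l; auto. apply pow2_ge_0. }
  lra.
Qed.
End Fwd.

Lemma C_eq0 (z : C) : fst z = 0 -> snd z = 0 -> z = RtoC 0.
Proof. destruct z; simpl; intros -> ->; reflexivity. Qed.

Lemma forward (P Q : operator) : is_orth_proj P -> is_orth_proj Q ->
  calkin_le P Q -> ess_contained (range P) (range Q).
Proof.
  intros HP HQ (Cop & Cadj & K & HCop & HCadj & Hadj & (HKb & HKnet) & Hid).
  intros eps Heps.
  pose proof HP as (HPb & HPid & HPadj). pose proof HQ as (HQb & HQid & HQadj).
  set (delta := eps ^ 4 / 4).
  assert (Hdelta : 0 < delta) by (unfold delta; apply Rdiv_lt_0_compat; [apply pow_lt; auto | lra]).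
  destruct (HKnet delta Hdelta) as (l & Hl & Hnet).
  set (L := fun y => K (vsub y (Q y))).
  assert (HL : is_bounded_op L).
  { apply (bop_comp K (fun y => vsub y (Q y))); auto. apply (bop_vsub (fun x => x) Q); auto. apply bop_id. }
  destruct (bop_bound L HL) as (ML & HML & HLb).
  set (E := fun l' v => range P v /\ forall u, In u l' -> inner (L v) u = RtoC 0).
  assert (HEl2 : forall l' v, E l' v -> in_l2 v). { intros l' v (Hv & _). apply (range_l2 P); auto. }
  assert (HEadd : forall l', (forall u, In u l' -> in_l2 u) -> forall v w, E l' v -> E l' w -> E l' (vadd v w)).
  { intros l' Hl' v w Hv Hw. pose proof (HEl2 _ _ Hv). pose proof (HEl2 _ _ Hw).
    destruct Hv as (Hv1 & Hv2), Hw as (Hw1 & Hw2). split. apply range_add; auto.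
    intros u Hu. rewrite bop_add by auto. rewrite inner_add_l by (auto; apply bop_l2; auto).
    rewrite Hv2, Hw2 by auto. ring. }
  assert (HEscal : forall l', (forall u, In u l' -> in_l2 u) -> forall a v, E l' v -> E l' (vscal a v)).
  { intros l' Hl' a v Hv. pose proof (HEl2 _ _ Hv).
    destruct Hv as (Hv1 & Hv2). split. apply range_scal; auto.
    intros u Hu. rewrite bop_scal by auto. rewrite inner_scal_l by (auto; apply bop_l2; auto).
    rewrite Hv2 by auto. ring. }
  exists (E l). split; [|split; [|split]].
  -
    split; [|split; [|split; [|split]]].
    + apply HEl2.
    + split. apply range_zero; auto. intros u Hu. rewrite bop_zero by auto. apply inner_zero_l; auto.
    + apply HEadd; auto.
    + apply HEscal; auto.
    + intros v Hv Happ. split.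
      * apply range_closed; auto. intros e He. destruct (Happ e He) as (w & (Hw & _) & Hvw). eauto.
      * intros u Hu. pose proof (Hl u Hu) as Hul2.
        assert (Hmain : forall e, 0 < e -> exists w, in_l2 w /\ l2norm (vsub v w) < e /\ inner (L v) u = inner (L (vsub v w)) u).
        { intros e He. destruct (Happ e He) as (w & Hw & Hvw). exists w. split. eauto. split; auto.
          pose proof (HEl2 _ _ Hw). rewrite bop_sub by auto. rewrite inner_sub_l by (auto; apply bop_l2; auto).
          destruct Hw as (_ & Hw0). rewrite Hw0 by auto. ring. }
        assert (Hbd : forall w, in_l2 w -> l2norm (vsub v w) < 1 -> True) by auto.
        apply C_eq0.
        -- apply (small_zero _ (ML * l2norm u)). apply Rmult_le_pos; auto; apply l2norm_ge0.
           intros e He. destruct (Hmain e He) as (w & Hw & Hvw & ->).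
           assert (Hvw2 : in_l2 (vsub v w)) by (apply in_l2_sub; auto).
           eapply Rle_trans. apply inner_re_bound; auto. apply bop_l2; auto.
           pose proof (HLb _ Hvw2). pose proof (l2norm_ge0 u). pose proof (l2norm_ge0 (L (vsub v w))).
           pose proof (l2norm_ge0 (vsub v w)).
           apply Rle_trans with (ML * l2norm (vsub v w) * l2norm u). apply Rmult_le_compat_r; auto.
           replace (ML * l2norm u * e) with (ML * e * l2norm u) by ring. apply Rmult_le_compat_r; auto.
           apply Rmult_le_compat_l; auto. lra.
        -- apply (small_zero _ (ML * l2norm u)). apply Rmult_le_pos; auto; apply l2norm_ge0.
           intros e He. destruct (Hmain e He) as (w & Hw & Hvw & ->).
           assert (Hvw2 : in_l2 (vsub v w)) by (apply in_l2_sub; auto).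
           eapply Rle_trans. apply inner_im_bound; auto. apply bop_l2; auto.
           pose proof (HLb _ Hvw2). pose proof (l2norm_ge0 u). pose proof (l2norm_ge0 (L (vsub v w))).
           pose proof (l2norm_ge0 (vsub v w)).
           apply Rle_trans with (ML * l2norm (vsub v w) * l2norm u). apply Rmult_le_compat_r; auto.
           replace (ML * l2norm u * e) with (ML * e * l2norm u) by ring. apply Rmult_le_compat_r; auto.
           apply Rmult_le_compat_l; auto. lra.
  - intros v (Hv & _); auto.
  -
    clear Hnet. induction l as [|a l' IH].
    + exists []. split. intros u []. intros v Hv. exists []. split. intros p [].
      simpl. rewrite vsub_zero_r. split; auto. intros u [].
    + assert (Hl' : forall u, In u l' -> in_l2 u) by (intros; apply Hl; right; auto).
      apply finite_codim_ext with (fun v => E l' v /\ inner (L v) a = RtoC 0).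
      { intros v ((H1 & H2) & H3). split; auto. intros u [<- | Hu]; auto. }
      apply codim_step; auto.
      * intros v (Hv & _); auto.
      * intros v w Hv Hw. pose proof (HEl2 _ _ Hv). pose proof (HEl2 _ _ Hw).
        rewrite bop_add by auto. apply inner_add_l; try apply bop_l2; auto. apply Hl; left; auto.
      * intros c v Hv. pose proof (HEl2 _ _ Hv).
        rewrite bop_scal by auto. apply inner_scal_l; try apply bop_l2; auto. apply Hl; left; auto.
  -
    intros v (HvP & Hv0) Hn1.
    assert (Hv : in_l2 v) by (apply (range_l2 P); auto).
    assert (HPv : P v = v) by (apply range_fix; auto).
    set (w := vsub v (Q v)).
    assert (HQv : in_l2 (Q v)) by (apply bop_l2; auto).
    assert (Hw : in_l2 w) by (apply in_l2_sub; auto).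
    pose proof (key_ineq P Q Cop Cadj K HP HQ HCop HCadj Hadj HKb Hid v Hv HPv) as Hkey. fold w in Hkey.
    rewrite Hn1 in Hkey.
    assert (Hw2 : l2norm w <= 2).
    { unfold w. eapply Rle_trans. apply l2tri_sub; auto. pose proof (proj_norm Q v HQ Hv). lra. }
    set (x := vscal (RtoC (/2)) w).
    assert (Hx : in_l2 x) by (apply in_l2_scal; auto).
    assert (Hhalf : Cmod (RtoC (/2)) = /2). { rewrite Cmod_R. apply Rabs_pos_eq. lra. }
    assert (Hxn : l2norm x <= 1). { unfold x. rewrite l2norm_scal, Hhalf by auto. lra. }
    destruct (Hnet x Hx Hxn) as (u & Hu & Hxu).
    pose proof (Hl u Hu) as Hul2.
    assert (HKw : in_l2 (K w)) by (apply bop_l2; auto).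
    assert (HKx : in_l2 (K x)) by (apply bop_l2; auto).
    assert (HKxe : K x = vscal (RtoC (/2)) (K w)) by (unfold x; apply bop_scal; auto).
    assert (Hin : inner (K x) u = RtoC 0).
    { rewrite HKxe, inner_scal_l by auto. specialize (Hv0 u Hu). unfold L in Hv0. fold w in Hv0. rewrite Hv0. ring. }
    assert (HKxn : l2norm (K x) <= delta).
    { assert (l2norm (K x) ^ 2 <= l2norm (K x) * delta).
      { rewrite <- ip_self by auto.
        replace (ip (K x) (K x)) with (ip (K x) (vsub (K x) u)).
        eapply Rle_trans. apply ip_cs; auto. apply in_l2_sub; auto.
        apply Rmult_le_compat_l. apply l2norm_ge0. left; auto.
        rewrite ip_sub_r by auto. unfold ip at 2. rewrite Hin. simpl. ring. }
      pose proof (l2norm_ge0 (K x)). nra. }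
    assert (HKwn : l2norm (K w) <= 2 * delta).
    { rewrite HKxe, l2norm_scal, Hhalf in HKxn by auto. lra. }
    assert (l2norm w ^ 4 <= eps ^ 4).
    { pose proof (l2norm_ge0 w). pose proof (l2norm_ge0 (K w)).
      assert (l2norm (K w) * l2norm w <= 2 * delta * 2).
      { apply Rmult_le_compat; auto. }
      unfold delta in H1. lra. }
    eapply Rbar_le_trans. apply (dist_le v (range Q) (Q v)). apply range_of; auto.
    simpl. apply pow4_le; auto. apply l2norm_ge0. lra.
Qed.

Definition TB (A : operator) (e : R) : Prop :=
  exists l : list vec, (forall u, In u l -> in_l2 u) /\
    forall x, in_l2 x -> l2norm x <= 1 -> exists u, In u l /\ l2norm (vsub (A x) u) < e.

Lemma TB_ext A B e : (forall x, in_l2 x -> A x = B x) -> TB A e -> TB B e.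
Proof.
  intros H (l & Hl & Hn). exists l; split; auto. intros x Hx Hx1.
  destruct (Hn x Hx Hx1) as (u & Hu & Hd). exists u; split; auto. rewrite <- H; auto.
Qed.

Lemma TB_mono A e e' : e <= e' -> TB A e -> TB A e'.
Proof.
  intros H (l & Hl & Hn). exists l; split; auto. intros x Hx Hx1.
  destruct (Hn x Hx Hx1) as (u & Hu & Hd). exists u; split; auto. lra.
Qed.

Lemma TB_small A e e' : (forall x, in_l2 x -> l2norm x <= 1 -> l2norm (A x) <= e) -> e < e' -> TB A e'.
Proof.
  intros H He. exists [vzero]. split. intros u [<-|[]]. apply in_l2_zero.
  intros x Hx Hx1. exists vzero. split. left; auto. rewrite vsub_zero_r. specialize (H x Hx Hx1). lra.
Qed.

Lemma TB_add A B e1 e2 : (forall x, in_l2 x -> in_l2 (A x)) -> (forall x, in_l2 x -> in_l2 (B x)) ->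
  TB A e1 -> TB B e2 -> TB (fun x => vadd (A x) (B x)) (e1 + e2).
Proof.
  intros HA HB (l1 & Hl1 & Hn1) (l2 & Hl2 & Hn2).
  exists (flat_map (fun u => map (fun v => vadd u v) l2) l1). split.
  - intros w Hw. apply in_flat_map in Hw. destruct Hw as (u & Hu & Hw). apply in_map_iff in Hw.
    destruct Hw as (v & <- & Hv). apply in_l2_add; auto.
  - intros x Hx Hx1. destruct (Hn1 x Hx Hx1) as (u & Hu & Hd1). destruct (Hn2 x Hx Hx1) as (v & Hv & Hd2).
    exists (vadd u v). split.
    + apply in_flat_map. exists u. split; auto. apply in_map_iff. exists v; auto.
    + assert (E : vsub (vadd (A x) (B x)) (vadd u v) = vadd (vsub (A x) u) (vsub (B x) v)) by (vext; ring).
      rewrite E. eapply Rle_lt_trans. apply l2tri; apply in_l2_sub; auto. lra.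
Qed.

Lemma TB_neg A e : (forall x, in_l2 x -> in_l2 (A x)) -> TB A e -> TB (fun x => vscal (RtoC (-1)) (A x)) e.
Proof.
  intros HA (l & Hl & Hn). exists (map (vscal (RtoC (-1))) l). split.
  - intros w Hw. apply in_map_iff in Hw. destruct Hw as (u & <- & Hu). apply in_l2_scal; auto.
  - intros x Hx Hx1. destruct (Hn x Hx Hx1) as (u & Hu & Hd). exists (vscal (RtoC (-1)) u). split.
    apply in_map; auto.
    assert (E : vsub (vscal (RtoC (-1)) (A x)) (vscal (RtoC (-1)) u) = vscal (RtoC (-1)) (vsub (A x) u)) by (vext; ring).
    rewrite E, l2norm_scal by (apply in_l2_sub; auto). rewrite Cmod_R.
    replace (Rabs (-1)) with 1 by (rewrite Rabs_left; lra). lra.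
Qed.

Lemma grid_cover n Rb s a : 0 < s -> -Rb <= a <= -Rb + INR n * s ->
  exists k, (k <= n)%nat /\ Rabs (a - (-Rb + INR k * s)) <= s.
Proof.
  intros Hs. revert a. induction n; intros a Ha.
  - exists 0%nat. split; auto. simpl in *. apply Rabs_le. lra.
  - destruct (Rle_dec a (-Rb + INR n * s)) as [Hle | Hgt].
    + destruct (IHn a) as (k & Hk & Hd). lra. exists k; split; auto.
    + exists (S n). split; auto. rewrite S_INR in *. apply Rabs_le. lra.
Qed.

Lemma grid Rb s : 0 <= Rb -> 0 < s -> exists G : list R,
  forall a, Rabs a <= Rb -> exists p, In p G /\ Rabs (a - p) <= s.
Proof.
  intros HR Hs. destruct (INR_unbounded (2 * Rb / s)) as (n & Hn).
  exists (map (fun k => -Rb + INR k * s) (seq 0 (S n))).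
  intros a Ha. apply Rabs_le_between in Ha.
  destruct (grid_cover n Rb s a Hs) as (k & Hk & Hd).
  { split. lra. assert (2 * Rb <= INR n * s).
    { apply Rmult_lt_compat_r with (r := s) in Hn; auto. unfold Rdiv in Hn. rewrite Rmult_assoc, Rinv_l in Hn by lra. lra. }
    lra. }
  exists (-Rb + INR k * s). split; auto. apply in_map_iff. exists k. split; auto. apply in_seq. lia.
Qed.

Lemma Cmod_le_sum (z : C) : Cmod z <= Rabs (fst z) + Rabs (snd z).
Proof.
  apply sq_le_nonneg. apply Cmod_ge_0. pose proof (Rabs_pos (fst z)); pose proof (Rabs_pos (snd z)); lra.
  rewrite Cmod2_alt. unfold Re, Im. pose proof (Rabs_pos (fst z)); pose proof (Rabs_pos (snd z)).
  rewrite <- (pow2_abs (fst z)), <- (pow2_abs (snd z)). nra.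
Qed.

Lemma TB_rank1 (f : vec -> C) g Rb eta : in_l2 g -> 0 <= Rb -> 0 < eta ->
  (forall x, in_l2 x -> l2norm x <= 1 -> Rabs (fst (f x)) <= Rb /\ Rabs (snd (f x)) <= Rb) ->
  TB (fun x => vscal (f x) g) eta.
Proof.
  intros Hg HR Heta Hf.
  set (s := eta / (2 * (l2norm g + 1))).
  pose proof (l2norm_ge0 g) as Hg0.
  assert (Hs : 0 < s) by (unfold s; apply Rdiv_lt_0_compat; lra).
  destruct (grid Rb s HR Hs) as (G & HG).
  exists (flat_map (fun p => map (fun q => vscal (p, q) g) G) G). split.
  - intros w Hw. apply in_flat_map in Hw. destruct Hw as (p & Hp & Hw). apply in_map_iff in Hw.
    destruct Hw as (q & <- & Hq). apply in_l2_scal; auto.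
  - intros x Hx Hx1. destruct (Hf x Hx Hx1) as (H1 & H2).
    destruct (HG _ H1) as (p & Hp & Hdp). destruct (HG _ H2) as (q & Hq & Hdq).
    exists (vscal (p, q) g). split.
    + apply in_flat_map. exists p. split; auto. apply in_map_iff. exists q; auto.
    + assert (E : vsub (vscal (f x) g) (vscal (p, q) g) = vscal (Cminus (f x) (p, q)) g) by (vext; ring).
      rewrite E, l2norm_scal by auto.
      pose proof (Cmod_le_sum (Cminus (f x) (p, q))). destruct (f x) as [a b]. simpl in H.
      simpl in Hdp, Hdq. unfold Rminus in Hdp, Hdq. assert (Cmod (Cminus (a, b) (p, q)) <= 2 * s) by lra.
      assert (2 * s * l2norm g < eta).
      { unfold s. replace (2 * (eta / (2 * (l2norm g + 1))) * l2norm g) with (eta * (l2norm g / (l2norm g + 1))) by (field; lra).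
        assert (l2norm g / (l2norm g + 1) < 1). { apply Rmult_lt_reg_r with (l2norm g + 1). lra. field_simplify; lra. }
        nra. }
      pose proof (Cmod_ge_0 (Cminus (a, b) (p, q))). nra.
Qed.

Fixpoint fsum (a : nat -> R) (N : nat) : R :=
  match N with O => 0 | S N' => fsum a N' + a N' end.
Fixpoint csum (a : nat -> C) (N : nat) : C :=
  match N with O => RtoC 0 | S N' => Cplus (csum a N') (a N') end.

Lemma sum_f_fsum a n : sum_f_R0 a n = fsum a (S n).
Proof. induction n. simpl; ring. simpl in *. rewrite IHn. ring. Qed.

Lemma fsum_ext a b N : (forall k, (k < N)%nat -> a k = b k) -> fsum a N = fsum b N.
Proof. induction N; intros H; simpl; auto. rewrite IHN, H; auto. Qed.

Lemma fsum_stable a N n : (forall k, (N <= k)%nat -> a k = 0) -> (N <= n)%nat -> fsum a n = fsum a N.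
Proof.
  intros H Hn. induction Hn; auto. simpl. rewrite H by lia. rewrite IHHn. ring.
Qed.

Lemma fin_series a N : (forall k, (N <= k)%nat -> a k = 0) -> is_series a (fsum a N).
Proof.
  intros H. apply is_series_Reals. intros eps Heps. exists N. intros n Hn.
  rewrite sum_f_fsum, (fsum_stable a N (S n)) by (auto; lia). unfold Rdist. rewrite Rminus_eq_0, Rabs_R0. auto.
Qed.

Lemma fsum_conv a : ex_series a -> forall eps, 0 < eps -> exists N0, forall N, (N0 <= N)%nat -> Rabs (fsum a N - Series a) < eps.
Proof.
  intros Ha eps Heps. pose proof (Series_correct a Ha) as H. apply is_series_Reals in H.
  destruct (H eps Heps) as (N0 & HN0). exists (S N0). intros N HN. destruct N. lia.
  rewrite <- sum_f_fsum. apply HN0. lia.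
Qed.

Lemma fsum_ge0 a N : (forall k, 0 <= a k) -> 0 <= fsum a N.
Proof. intros H; induction N; simpl. lra. pose proof (H N); lra. Qed.

Definition ebas (n : nat) : vec := fun k => if Nat.eqb k n then RtoC 1 else RtoC 0.
Definition trunc (N : nat) (x : vec) : vec := fun k => if Nat.ltb k N then x k else RtoC 0.

Lemma trunc_0 x : trunc 0 x = vzero.
Proof. reflexivity. Qed.

Lemma trunc_S N x : trunc (S N) x = vadd (trunc N x) (vscal (x N) (ebas N)).
Proof.
  apply functional_extensionality; intro k. unfold trunc, vadd, vscal, ebas.
  destruct (Nat.ltb_spec k (S N)), (Nat.ltb_spec k N), (Nat.eqb_spec k N); subst; try lia; ring.
Qed.

Lemma sqv_fin_l2 x N : (forall k, (N <= k)%nat -> x k = RtoC 0) -> in_l2 x /\ l2norm x ^ 2 = fsum (sqv x) N.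
Proof.
  intros H. assert (H0 : forall k, (N <= k)%nat -> sqv x k = 0).
  { intros k Hk. unfold sqv. rewrite H by auto. rewrite Cmod_0. ring. }
  pose proof (fin_series _ _ H0) as Hs.
  assert (in_l2 x) by (eexists; eauto).
  split; auto. rewrite l2norm_sq by auto. apply is_series_unique; auto.
Qed.

Lemma ebas_l2 n : in_l2 (ebas n).
Proof. apply (sqv_fin_l2 _ (S n)). intros k Hk. unfold ebas. destruct (Nat.eqb_spec k n); auto. lia. Qed.

Lemma trunc_l2 N x : in_l2 (trunc N x).
Proof. apply (sqv_fin_l2 _ N). intros k Hk. unfold trunc. destruct (Nat.ltb_spec k N); auto. lia. Qed.

Lemma trunc_norm N x : l2norm (trunc N x) ^ 2 = fsum (sqv x) N.
Proof.
  rewrite (proj2 (sqv_fin_l2 (trunc N x) N ltac:(intros k Hk; unfold trunc; destruct (Nat.ltb_spec k N); auto; lia))).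
  apply fsum_ext. intros k Hk. unfold sqv, trunc. destruct (Nat.ltb_spec k N); auto; lia.
Qed.

Lemma tail_norm N x : in_l2 x -> l2norm (vsub x (trunc N x)) ^ 2 = Series (sqv x) - fsum (sqv x) N.
Proof.
  intros Hx. assert (Hl : in_l2 (vsub x (trunc N x))) by (apply in_l2_sub; auto; apply trunc_l2).
  rewrite l2norm_sq by auto.
  assert (E : Series (sqv x) = Series (sqv (trunc N x)) + Series (sqv (vsub x (trunc N x)))).
  { rewrite <- Series_plus by (auto; apply trunc_l2). apply Series_ext. intros k.
    unfold sqv, vsub, trunc. destruct (Nat.ltb_spec k N).
    - replace (Cminus (x k) (x k)) with (RtoC 0) by ring. rewrite Cmod_0. ring.
    - replace (Cminus (x k) (RtoC 0)) with (x k) by ring. rewrite Cmod_0. ring. }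
  rewrite <- (l2norm_sq (trunc N x)) in E by apply trunc_l2. rewrite trunc_norm in E. lra.
Qed.

Section Riesz.
Variable Phi : vec -> C.
Variable M : R.
Hypothesis HM : 0 <= M.
Hypothesis Hadd : forall x y, in_l2 x -> in_l2 y -> Phi (vadd x y) = Cplus (Phi x) (Phi y).
Hypothesis Hscal : forall a x, in_l2 x -> Phi (vscal a x) = Cmult a (Phi x).
Hypothesis Hbd : forall x, in_l2 x -> Cmod (Phi x) <= M * l2norm x.

Lemma Phi_sub x y : in_l2 x -> in_l2 y -> Phi (vsub x y) = Cminus (Phi x) (Phi y).
Proof. intros. rewrite vsub_as, Hadd, Hscal by (auto; apply in_l2_scal; auto). ring. Qed.

Lemma Phi_zero : Phi vzero = RtoC 0.
Proof. rewrite vzero_eq, Hscal by apply in_l2_zero. ring. Qed.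

Lemma Phi_trunc N x : Phi (trunc N x) = csum (fun k => Cmult (x k) (Phi (ebas k))) N.
Proof.
  induction N. rewrite trunc_0. apply Phi_zero.
  rewrite trunc_S. rewrite Hadd by (apply trunc_l2 || apply in_l2_scal, ebas_l2). rewrite Hscal by apply ebas_l2. rewrite IHN. reflexivity.
Qed.

Definition ry (k : nat) : C := Cconj (Phi (ebas k)).

Lemma csum_fst a N : fst (csum a N) = fsum (fun k => fst (a k)) N.
Proof. induction N; simpl; auto. rewrite IHN; auto. Qed.
Lemma csum_snd a N : snd (csum a N) = fsum (fun k => snd (a k)) N.
Proof. induction N; simpl; auto. rewrite IHN; auto. Qed.

Lemma Phi_trunc_re N x : fst (Phi (trunc N x)) = fsum (re_n x ry) N.
Proof. rewrite Phi_trunc, csum_fst. apply fsum_ext. intros; unfold re_n, ry. rewrite Cconj_conj. auto. Qed.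
Lemma Phi_trunc_im N x : snd (Phi (trunc N x)) = fsum (im_n x ry) N.
Proof. rewrite Phi_trunc, csum_snd. apply fsum_ext. intros; unfold im_n, ry. rewrite Cconj_conj. auto. Qed.

Lemma ry_l2 : in_l2 ry.
Proof.
  assert (Hb : forall N, fsum (sqv ry) N <= M ^ 2).
  { intros N. set (S := fsum (sqv ry) N).
    assert (HS : S = fst (Phi (trunc N ry))).
    { unfold S. rewrite Phi_trunc_re. apply fsum_ext. intros; rewrite re_n_self; auto. }
    assert (HS2 : S <= M * l2norm (trunc N ry)).
    { rewrite HS. eapply Rle_trans. apply Rle_abs. eapply Rle_trans. apply re_le_Cmod. apply Hbd. apply trunc_l2. }
    pose proof (trunc_norm N ry) as HT. fold S in HT.
    pose proof (l2norm_ge0 (trunc N ry)).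
    assert (l2norm (trunc N ry) <= M) by nra.
    rewrite <- HT. apply pow_incr; auto. }
  destruct (growing_cv (sum_f_R0 (sqv ry))) as (l & Hl).
  - intros n. simpl. pose proof (sqv_ge0 ry (S n)). lra.
  - exists (M ^ 2). intros r (i & ->). rewrite sum_f_fsum. apply Hb.
  - exists l. apply is_series_Reals. exact Hl.
Qed.

Lemma riesz_comp (pr : C -> R) (s : nat -> R) x : in_l2 x ->
  (forall z, Rabs (pr z) <= Cmod z) ->
  (forall z w, pr (Cminus z w) = pr z - pr w) ->
  (forall N, pr (Phi (trunc N x)) = fsum s N) -> ex_series s ->
  pr (Phi x) = Series s.
Proof.
  intros Hx Hpr Hprsub Htr Hs.
  apply Rminus_diag_uniq. apply (small_zero _ 2). lra. intros eps Heps.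
  destruct (fsum_conv s Hs eps Heps) as (N1 & HN1).
  set (t := eps / (M + 1)).
  assert (Ht : 0 < t) by (unfold t; apply Rdiv_lt_0_compat; lra).
  destruct (fsum_conv (sqv x) Hx (t^2) ltac:(apply pow_lt; auto)) as (N2 & HN2).
  set (N := Nat.max N1 N2).
  specialize (HN1 N ltac:(lia)). specialize (HN2 N ltac:(lia)).
  pose proof (tail_norm N x Hx) as HT.
  assert (Hlt : l2norm (vsub x (trunc N x)) <= t).
  { apply sq_le_nonneg. apply l2norm_ge0. lra. rewrite HT. apply Rabs_lt_between in HN2. lra. }
  assert (Hd : Rabs (pr (Phi x) - pr (Phi (trunc N x))) <= M * t).
  { rewrite <- Hprsub, <- Phi_sub by (auto; apply trunc_l2). eapply Rle_trans. apply Hpr.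
    eapply Rle_trans. apply Hbd. apply in_l2_sub; auto; apply trunc_l2. apply Rmult_le_compat_l; auto. }
  rewrite Htr in Hd.
  assert (M * t <= eps). { unfold t. replace (M * (eps / (M+1))) with (eps * (M / (M+1))) by (field; lra).
    assert (M / (M+1) <= 1). { apply Rmult_le_reg_r with (M+1). lra. field_simplify; lra. } nra. }
  apply Rabs_le_between in Hd. apply Rabs_lt_between in HN1. apply Rabs_le. lra.
Qed.

Lemma riesz : exists y, in_l2 y /\ forall x, in_l2 x -> Phi x = inner x y.
Proof.
  exists ry. split. apply ry_l2. intros x Hx. rewrite inner_eq. destruct (Phi x) as [p q] eqn:E.
  f_equal.
  - change p with (fst (p, q)). rewrite <- E.
    apply (riesz_comp fst (re_n x ry) x Hx).
    + apply re_le_Cmod.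
    + intros [] []; simpl; ring.
    + intros; apply Phi_trunc_re.
    + apply ex_re; auto. apply ry_l2.
  - change q with (snd (p, q)). rewrite <- E.
    apply (riesz_comp snd (im_n x ry) x Hx).
    + apply im_le_Cmod.
    + intros [] []; simpl; ring.
    + intros; apply Phi_trunc_im.
    + apply ex_im; auto. apply ry_l2.
Qed.
End Riesz.

Lemma inv_small e : 0 < e -> exists N, forall n, (N <= n)%nat -> / INR (S n) < e.
Proof.
  intros He. destruct (INR_unbounded (/ e)) as (N & HN). exists N. intros n Hn.
  assert (H1 : INR N <= INR n) by (apply le_INR; lia).
  rewrite S_INR. assert (Hp : 0 < INR n + 1) by (pose proof (pos_INR n); lra).
  assert (H2 : e * / e = 1) by (field; lra).
  assert (H3 : e * (INR n + 1) > 1) by nra.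
  apply Rmult_lt_reg_r with (INR n + 1); auto. rewrite Rinv_l by lra. lra.
Qed.

Lemma cs_l2 M v : is_closed_subspace M -> M v -> in_l2 v.
Proof. intros (H & _); auto. Qed.
Lemma cs_zero M : is_closed_subspace M -> M vzero.
Proof. intros (_ & H & _); auto. Qed.
Lemma cs_add M v w : is_closed_subspace M -> M v -> M w -> M (vadd v w).
Proof. intros (_ & _ & H & _); auto. Qed.
Lemma cs_scal M a v : is_closed_subspace M -> M v -> M (vscal a v).
Proof. intros (_ & _ & _ & H & _); auto. Qed.
Lemma cs_sub M v w : is_closed_subspace M -> M v -> M w -> M (vsub v w).
Proof. intros. rewrite vsub_as. apply cs_add; auto. apply cs_scal; auto. Qed.
Lemma cs_lim M v : is_closed_subspace M -> in_l2 v ->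
  (forall eps, 0 < eps -> exists w, M w /\ l2norm (vsub v w) < eps) -> M v.
Proof. intros (_ & _ & _ & _ & H); auto. Qed.

Lemma cs_ext (A B : subspace) : (forall v, A v <-> B v) -> is_closed_subspace A -> is_closed_subspace B.
Proof.
  intros H HA. repeat split.
  - intros v Hv. apply H in Hv. eapply cs_l2; eauto.
  - apply H. apply cs_zero; auto.
  - intros v w Hv Hw. apply H. apply H in Hv, Hw. apply cs_add; auto.
  - intros a v Hv. apply H. apply H in Hv. apply cs_scal; auto.
  - intros v Hv Happ. apply H. apply cs_lim; auto. intros eps Heps. destruct (Happ eps Heps) as (w & Hw & Hd).
    exists w; split; auto. apply H; auto.
Qed.

Lemma lineA_delta M z : is_closed_subspace M -> in_l2 z -> ~ M z ->
  exists delta, 0 < delta /\ forall m c, M m -> delta * Cmod c <= l2norm (vadd m (vscal c z)).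
Proof.
  intros HM Hz Hnz.
  assert (Hex : exists eps, 0 < eps /\ forall w, M w -> eps <= l2norm (vsub z w)).
  { apply NNPP. intro Hn. apply Hnz. apply cs_lim; auto. intros eps Heps.
    apply NNPP. intro Hn2. apply Hn. exists eps. split; auto. intros w Hw.
    apply Rnot_lt_le. intro Hlt. apply Hn2. exists w; auto. }
  destruct Hex as (eps & Heps & Hd). exists eps. split; auto.
  intros m c Hm. pose proof (cs_l2 M m HM Hm).
  destruct (classic (c = RtoC 0)) as [-> | Hc].
  - rewrite Cmod_0. rewrite Rmult_0_r. apply l2norm_ge0.
  - set (w := vscal (Copp (Cinv c)) m).
    assert (Hw : M w) by (apply cs_scal; auto).
    assert (E : vadd m (vscal c z) = vscal c (vsub z w)).
    { unfold w. vext. field. auto. }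
    rewrite E, l2norm_scal. specialize (Hd w Hw). pose proof (Cmod_ge_0 c). nra.
    apply in_l2_sub; auto. eapply cs_l2; eauto.
Qed.

Lemma lineA_closed M z : is_closed_subspace M -> in_l2 z -> ~ M z ->
  is_closed_subspace (fun v => exists c, M (vsub v (vscal c z))).
Proof.
  intros HM Hz Hnz. destruct (lineA_delta M z HM Hz Hnz) as (delta & Hdelta & Hdel).
  repeat split.
  - intros v (c & Hc). replace v with (vadd (vsub v (vscal c z)) (vscal c z)) by (vext; ring).
    apply in_l2_add. eapply cs_l2; eauto. apply in_l2_scal; auto.
  - exists (RtoC 0). replace (vsub vzero (vscal (RtoC 0) z)) with vzero by (vext; ring). apply cs_zero; auto.
  - intros v w (c1 & H1) (c2 & H2). exists (Cplus c1 c2).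
    replace (vsub (vadd v w) (vscal (Cplus c1 c2) z)) with (vadd (vsub v (vscal c1 z)) (vsub w (vscal c2 z))) by (vext; ring).
    apply cs_add; auto.
  - intros a v (c & H). exists (Cmult a c).
    replace (vsub (vscal a v) (vscal (Cmult a c) z)) with (vscal a (vsub v (vscal c z))) by (vext; ring).
    apply cs_scal; auto.
  - intros v Hv Happ.
    assert (Hch : forall n : nat, {p : vec * C | M (vsub (fst p) (vscal (snd p) z)) /\ l2norm (vsub v (fst p)) < / INR (S n)}).
    { intros n. apply constructive_indefinite_description.
      assert (0 < / INR (S n)) by (apply Rinv_0_lt_compat, lt_0_INR; lia).
      destruct (Happ _ H) as (w & (c & Hc) & Hd). exists (w, c). simpl. auto. }
    set (W := fun n => fst (proj1_sig (Hch n))).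
    set (cc := fun n => snd (proj1_sig (Hch n))).
    assert (HWM : forall n, M (vsub (W n) (vscal (cc n) z))) by (intros n; unfold W, cc; destruct (Hch n) as (p & Hp1 & Hp2); auto).
    assert (HWd : forall n, l2norm (vsub v (W n)) < / INR (S n)) by (intros n; unfold W, cc; destruct (Hch n) as (p & Hp1 & Hp2); auto).
    assert (HWl : forall n, in_l2 (W n)).
    { intros n. replace (W n) with (vadd (vsub (W n) (vscal (cc n) z)) (vscal (cc n) z)) by (vext; ring).
      apply in_l2_add. eapply cs_l2; eauto. apply in_l2_scal; auto. }
    assert (Hcau : forall n m, delta * Cmod (Cminus (cc n) (cc m)) <= / INR (S n) + / INR (S m)).
    { intros n m.
      set (m' := vsub (vsub (W n) (vscal (cc n) z)) (vsub (W m) (vscal (cc m) z))).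
      assert (Hm' : M m') by (apply cs_sub; auto).
      eapply Rle_trans. apply (Hdel m' (Cminus (cc n) (cc m)) Hm').
      replace (vadd m' (vscal (Cminus (cc n) (cc m)) z)) with (vsub (W n) (W m)) by (unfold m'; vext; ring).
      eapply Rle_trans. apply (l2tri3 _ v); auto.
      rewrite vsub_sym_norm by auto. pose proof (HWd n); pose proof (HWd m); lra. }
    assert (Hcauchy : forall (pr : C -> R), (forall w, Rabs (pr w) <= Cmod w) -> (forall a b, pr (Cminus a b) = pr a - pr b) ->
              Cauchy_crit (fun n => pr (cc n))).
    { intros pr Hpr Hprs eps Heps.
      destruct (inv_small (eps * delta / 2)) as (N & HN). apply Rdiv_lt_0_compat; [nra|lra].
      exists N. intros n m Hn Hm. unfold Rdist. rewrite <- Hprs.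
      eapply Rle_lt_trans. apply Hpr. apply Rmult_lt_reg_l with delta; auto.
      eapply Rle_lt_trans. apply Hcau. pose proof (HN n Hn); pose proof (HN m Hm). lra. }
    destruct (Rcomplete.R_complete _ (Hcauchy fst re_le_Cmod ltac:(intros [] []; simpl; ring))) as (a & Ha).
    destruct (Rcomplete.R_complete _ (Hcauchy snd im_le_Cmod ltac:(intros [] []; simpl; ring))) as (b & Hb).
    exists (a, b). apply cs_lim; auto. apply in_l2_sub; auto; apply in_l2_scal; auto.
    intros eps Heps.
    pose proof (l2norm_ge0 z) as Hz0.
    set (t := eps / 2).
    set (t2 := t / (2 * (l2norm z + 1))).
    assert (Ht2 : 0 < t2) by (unfold t2, t; apply Rdiv_lt_0_compat; lra).
    destruct (inv_small t ltac:(unfold t; lra)) as (N1 & HN1).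
    destruct (Ha t2 Ht2) as (N2 & HN2). destruct (Hb t2 Ht2) as (N3 & HN3).
    set (n := Nat.max N1 (Nat.max N2 N3)).
    specialize (HN1 n ltac:(lia)). specialize (HN2 n ltac:(lia)). specialize (HN3 n ltac:(lia)).
    exists (vsub (W n) (vscal (cc n) z)). split; auto.
    replace (vsub (vsub v (vscal (a, b) z)) (vsub (W n) (vscal (cc n) z)))
      with (vadd (vsub v (W n)) (vscal (Cminus (cc n) (a, b)) z)) by (vext; ring).
    eapply Rle_lt_trans. apply l2tri. apply in_l2_sub; auto. apply in_l2_scal; auto.
    rewrite l2norm_scal by auto.
    pose proof (Cmod_le_sum (Cminus (cc n) (a, b))) as Hcm.
    unfold Rdist in HN2, HN3. destruct (cc n) as [p q]. simpl in Hcm, HN2, HN3. unfold Rminus in HN2, HN3.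
    assert (Cmod (Cminus (p, q) (a, b)) <= 2 * t2) by lra.
    assert (2 * t2 * l2norm z <= t).
    { unfold t2. replace (2 * (t / (2 * (l2norm z + 1))) * l2norm z) with (t * (l2norm z / (l2norm z + 1))) by (field; lra).
      assert (l2norm z / (l2norm z + 1) <= 1). { apply Rmult_le_reg_r with (l2norm z + 1). lra. field_simplify; lra. }
      assert (0 < t) by (unfold t; lra). nra. }
    pose proof (HWd n). pose proof (Cmod_ge_0 (Cminus (p, q) (a, b))).
    assert (Cmod (Cminus (p, q) (a, b)) * l2norm z <= 2 * t2 * l2norm z) by (apply Rmult_le_compat_r; auto).
    unfold t in *. lra.
Qed.

Fixpoint Sp (E0 : subspace) (l : list vec) : subspace :=
  match l with
  | [] => E0
  | z :: l' => fun v => exists c, Sp E0 l' (vsub v (vscal c z))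
  end.

Lemma vsub_scal0 v z : vsub v (vscal (RtoC 0) z) = v.
Proof. vext. ring. Qed.

Lemma Sp_closed E0 l : is_closed_subspace E0 -> (forall u, In u l -> in_l2 u) -> is_closed_subspace (Sp E0 l).
Proof.
  intros H0. induction l as [|z l' IH]; intros Hl; simpl; auto.
  assert (HN : is_closed_subspace (Sp E0 l')) by (apply IH; intros; apply Hl; right; auto).
  destruct (classic (Sp E0 l' z)) as [Hz | Hz].
  - apply (cs_ext (Sp E0 l')); auto. intros v. split.
    + intros Hv. exists (RtoC 0). rewrite vsub_scal0; auto.
    + intros (c & Hc). replace v with (vadd (vsub v (vscal c z)) (vscal c z)) by (vext; ring).
      apply cs_add; auto. apply cs_scal; auto.
  - apply lineA_closed; auto. apply Hl; left; auto.
Qed.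

Lemma Sp_base E0 l v : E0 v -> Sp E0 l v.
Proof. induction l; simpl; auto. intros; exists (RtoC 0). rewrite vsub_scal0; auto. Qed.

Lemma Sp_add_elem E0 l : is_closed_subspace E0 -> (forall u, In u l -> in_l2 u) ->
  forall u c w, In u l -> Sp E0 l w -> Sp E0 l (vadd w (vscal c u)).
Proof.
  intros H0. induction l as [|z l' IH]; intros Hl u c w Hu Hw; simpl in *. destruct Hu.
  destruct Hw as (c0 & Hc0). destruct Hu as [<- | Hu].
  - exists (Cplus c0 c). replace (vsub (vadd w (vscal c z)) (vscal (Cplus c0 c) z)) with (vsub w (vscal c0 z)) by (vext; ring). auto.
  - exists c0. replace (vsub (vadd w (vscal c u)) (vscal c0 z)) with (vadd (vsub w (vscal c0 z)) (vscal c u)) by (vext; ring).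
    apply IH; auto.
Qed.

Lemma Sp_add_lincomb E0 l : is_closed_subspace E0 -> (forall u, In u l -> in_l2 u) ->
  forall cs, (forall p, In p cs -> In (snd p) l) -> forall w, Sp E0 l w -> Sp E0 l (vadd w (lincomb cs)).
Proof.
  intros H0 Hl. induction cs as [|[a u] cs IH]; intros Hcs w Hw; simpl.
  - replace (vadd w vzero) with w by (vext; ring). auto.
  - replace (vadd w (vadd (vscal a u) (lincomb cs))) with (vadd (vadd w (vscal a u)) (lincomb cs)) by (vext; ring).
    apply IH. intros; apply Hcs; right; auto.
    apply Sp_add_elem; auto. apply (Hcs (a, u)); left; auto.
Qed.

Lemma codim_Sp (E0 X : subspace) l : is_closed_subspace E0 -> (forall u, In u l -> in_l2 u) ->
  (forall v, X v -> exists cs, (forall p, In p cs -> In (snd p) l) /\ E0 (vsub v (lincomb cs))) ->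
  forall v, X v -> Sp E0 l v.
Proof.
  intros H0 Hl Hd v Hv. destruct (Hd v Hv) as (cs & Hcs & HE).
  replace v with (vadd (vsub v (lincomb cs)) (lincomb cs)) by (vext; ring).
  apply Sp_add_lincomb; auto. apply Sp_base; auto.
Qed.

Lemma Sp_sub (E0 X : subspace) l : (forall v, E0 v -> X v) -> (forall u, In u l -> X u) ->
  (forall v w, X v -> X w -> X (vadd v w)) -> (forall a v, X v -> X (vscal a v)) ->
  forall v, Sp E0 l v -> X v.
Proof.
  intros H0 Hl Hadd Hscal. induction l as [|z l' IH]; simpl; auto.
  intros v Hv.  destruct Hv as [c Hc].
  assert (E : v = vadd (vsub v (vscal c z)) (vscal c z)) by (vext; ring). rewrite E.
  apply Hadd. apply IH; auto. intros; apply Hl; right; auto. apply Hscal. apply Hl; left; auto.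
Qed.

Lemma inner_bound_C a b : in_l2 a -> in_l2 b -> Cmod (inner a b) <= 2 * (l2norm a * l2norm b).
Proof.
  intros. eapply Rle_trans. apply Cmod_le_sum.
  pose proof (inner_re_bound a b H H0). pose proof (inner_im_bound a b H H0). lra.
Qed.

Lemma bop_rank1 A h : is_bounded_op A -> in_l2 h -> is_bounded_op (fun x => vscal (inner (A x) h) h).
Proof.
  intros HA Hh. destruct (bop_bound A HA) as (MA & HMA & HA').
  repeat split.
  - intros; apply in_l2_scal; auto.
  - intros x y Hx Hy. rewrite (bop_add A) by auto. rewrite inner_add_l by (auto; apply bop_l2; auto). vext. ring.
  - intros a x Hx. rewrite (bop_scal A) by auto. rewrite inner_scal_l by (auto; apply bop_l2; auto). vext. ring.
  - exists (2 * MA * l2norm h * l2norm h). intros x Hx. rewrite l2norm_scal by auto.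
    pose proof (inner_bound_C (A x) h ltac:(apply bop_l2; auto) Hh). pose proof (HA' x Hx).
    pose proof (l2norm_ge0 h). pose proof (l2norm_ge0 x). pose proof (l2norm_ge0 (A x)).
    apply Rle_trans with (2 * (l2norm (A x) * l2norm h) * l2norm h). apply Rmult_le_compat_r; auto.
    apply Rle_trans with (2 * ((MA * l2norm x) * l2norm h) * l2norm h).
    apply Rmult_le_compat_r; auto. apply Rmult_le_compat_l. lra. apply Rmult_le_compat_r; auto.
    right; ring.
Qed.

Lemma Cconj_RtoC r : Cconj (RtoC r) = RtoC r.
Proof. unfold Cconj, RtoC; simpl. f_equal; ring. Qed.

Section Peel.
Variables Pi : operator.
Hypothesis HPi : is_orth_proj Pi.
Variable N : subspace.
Hypothesis HN : is_closed_subspace N.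
Variable z : vec.
Hypothesis Hz : in_l2 z.
Hypothesis Hnz : ~ N z.
Hypothesis Hr : forall v, range Pi v <-> exists c, N (vsub v (vscal c z)).

Definition Srel x c := N (vsub (Pi x) (vscal c z)).

Lemma Srel_uniq x c1 c2 : Srel x c1 -> Srel x c2 -> c1 = c2.
Proof.
  intros H1 H2. apply NNPP. intro Hne. apply Hnz.
  assert (Hd : N (vsub (vsub (Pi x) (vscal c2 z)) (vsub (Pi x) (vscal c1 z)))) by (apply cs_sub; auto).
  assert (Hne' : Cminus c1 c2 <> RtoC 0). { intro E. apply Hne. replace c1 with (Cplus (Cminus c1 c2) c2) by ring. rewrite E. ring. }
  replace z with (vscal (Cinv (Cminus c1 c2)) (vsub (vsub (Pi x) (vscal c2 z)) (vsub (Pi x) (vscal c1 z)))).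
  apply cs_scal; auto. vext. field. auto.
Qed.

Definition phi x : C := epsilon (inhabits (RtoC 0)) (Srel x).

Lemma phi_spec x : in_l2 x -> Srel x (phi x).
Proof.
  intros Hx. unfold phi. apply epsilon_spec. apply Hr. exists x; split; auto.
Qed.

Lemma phi_eq x c : in_l2 x -> Srel x c -> phi x = c.
Proof. intros Hx Hc. apply (Srel_uniq x); auto. apply phi_spec; auto. Qed.

Lemma phi_add x y : in_l2 x -> in_l2 y -> phi (vadd x y) = Cplus (phi x) (phi y).
Proof.
  intros Hx Hy. apply phi_eq. apply in_l2_add; auto. unfold Srel. destruct HPi as (HB & _).
  rewrite bop_add by auto.
  replace (vsub (vadd (Pi x) (Pi y)) (vscal (Cplus (phi x) (phi y)) z)) with
    (vadd (vsub (Pi x) (vscal (phi x) z)) (vsub (Pi y) (vscal (phi y) z))) by (vext; ring).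
  apply cs_add; auto; apply phi_spec; auto.
Qed.

Lemma phi_scal a x : in_l2 x -> phi (vscal a x) = Cmult a (phi x).
Proof.
  intros Hx. apply phi_eq. apply in_l2_scal; auto. unfold Srel. destruct HPi as (HB & _).
  rewrite (bop_scal Pi) by auto.
  replace (vsub (vscal a (Pi x)) (vscal (Cmult a (phi x)) z)) with
    (vscal a (vsub (Pi x) (vscal (phi x) z))) by (vext; ring).
  apply cs_scal; auto; apply phi_spec; auto.
Qed.

Lemma phi_bound : exists M, 0 <= M /\ forall x, in_l2 x -> Cmod (phi x) <= M * l2norm x.
Proof.
  destruct (lineA_delta N z HN Hz Hnz) as (delta & Hdelta & Hdel).
  exists (/ delta). split. left; apply Rinv_0_lt_compat; auto.
  intros x Hx. pose proof (Hdel _ (phi x) (phi_spec x Hx)) as H.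
  replace (vadd (vsub (Pi x) (vscal (phi x) z)) (vscal (phi x) z)) with (Pi x) in H by (vext; ring).
  pose proof (proj_norm Pi x HPi Hx).
  apply Rmult_le_reg_l with delta; auto. rewrite <- Rmult_assoc, Rinv_r by lra. lra.
Qed.

Lemma peel : exists Pi' h, is_orth_proj Pi' /\ (forall v, range Pi' v <-> N v) /\
  in_l2 h /\ l2norm h = 1 /\ Pi h = h /\
  forall x, in_l2 x -> Pi' x = vsub (Pi x) (vscal (inner (Pi x) h) h).
Proof.
  pose proof HPi as (HB & Hid & Hadj).
  destruct phi_bound as (M & HM & Hbd).
  destruct (riesz phi M HM phi_add phi_scal Hbd) as (y & Hy & Hphi).
  set (h0 := Pi y).
  assert (Hh0 : in_l2 h0) by (apply bop_l2; auto).
  assert (Hw : forall w, range Pi w -> phi w = inner w h0).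
  { intros w Hwr. pose proof (range_l2 Pi w HB Hwr). rewrite Hphi by auto.
    rewrite <- (range_fix Pi w HPi Hwr) at 1. apply Hadj; auto. }
  assert (Hzr : range Pi z).
  { apply Hr. exists (RtoC 1). replace (vsub z (vscal (RtoC 1) z)) with vzero by (vext; ring). apply cs_zero; auto. }
  assert (Hphiz : phi z = RtoC 1).
  { apply phi_eq; auto. unfold Srel. rewrite (range_fix Pi z HPi Hzr).
    replace (vsub z (vscal (RtoC 1) z)) with vzero by (vext; ring). apply cs_zero; auto. }
  assert (Hzh0 : inner z h0 = RtoC 1) by (rewrite <- Hw; auto).
  set (nh := l2norm h0).
  assert (Hnh : 0 < nh).
  { destruct (l2norm_ge0 h0) as [|E]; auto. exfalso. symmetry in E. apply l2norm_zero in E; auto.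
    rewrite E in Hzh0. rewrite vzero_eq, inner_scal_r in Hzh0 by (auto; apply in_l2_zero).
    rewrite Cconj_RtoC in Hzh0. apply (f_equal fst) in Hzh0. unfold Cmult, RtoC in Hzh0. simpl in Hzh0. lra. }
  set (h := vscal (RtoC (/ nh)) h0).
  assert (Hh : in_l2 h) by (apply in_l2_scal; auto).
  assert (Hhn : l2norm h = 1).
  { unfold h. rewrite l2norm_scal, Cmod_R, Rabs_pos_eq by (auto; left; apply Rinv_0_lt_compat; auto). fold nh. field. lra. }
  assert (Hhr : range Pi h) by (apply range_scal; auto; apply range_of; auto).
  assert (HPh : Pi h = h) by (apply range_fix; auto).
  assert (Hwh : forall w, range Pi w -> inner w h = Cmult (RtoC (/ nh)) (phi w)).
  { intros w Hwr. unfold h. rewrite inner_scal_r, Cconj_RtoC, Hw; auto. eapply range_l2; eauto. }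
  assert (HkerN : forall w, range Pi w -> (inner w h = RtoC 0 <-> N w)).
  { intros w Hwr. pose proof (range_l2 Pi w HB Hwr) as Hwl. pose proof (range_fix Pi w HPi Hwr) as HPw. split.
    - intros H0. assert (phi w = RtoC 0).
      { rewrite Hwh in H0 by auto. replace (phi w) with (Cmult (RtoC nh) (Cmult (RtoC (/ nh)) (phi w))).
        rewrite H0. ring. unfold RtoC. destruct (phi w). unfold Cmult; simpl. f_equal; field; lra. }
      pose proof (phi_spec w Hwl) as Hs. unfold Srel in Hs. rewrite H, HPw, vsub_scal0 in Hs. auto.
    - intros HNw. assert (phi w = RtoC 0). { apply phi_eq; auto. unfold Srel. rewrite HPw, vsub_scal0. auto. }
      rewrite Hwh, H by auto. ring. }
  set (Pi' := fun x => vsub (Pi x) (vscal (inner (Pi x) h) h)).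
  assert (HB' : is_bounded_op Pi').
  { apply (bop_vsub Pi (fun x => vscal (inner (Pi x) h) h)); auto. apply bop_rank1; auto. }
  assert (Hhh : inner h h = RtoC 1). { rewrite inner_self, Hhn by auto. unfold RtoC; f_equal; ring. }
  assert (HPi'r : forall x, in_l2 x -> range Pi (Pi' x) /\ inner (Pi' x) h = RtoC 0).
  { intros x Hx. assert (HPx : in_l2 (Pi x)) by (apply bop_l2; auto). split.
    - unfold Pi'. rewrite vsub_as. apply range_add; auto. apply range_of; auto. apply range_scal; auto. apply range_scal; auto.
    - unfold Pi'. rewrite inner_sub_l, inner_scal_l, Hhh by (auto; apply in_l2_scal; auto). ring. }
  assert (HfixN : forall v, N v -> Pi' v = v).
  { intros v Hv. assert (Hvr : range Pi v). { apply Hr. exists (RtoC 0). rewrite vsub_scal0; auto. }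
    pose proof (range_fix Pi v HPi Hvr) as HPv. unfold Pi'. rewrite HPv.
    assert (inner v h = RtoC 0) by (apply HkerN; auto). rewrite H. vext. ring. }
  exists Pi', h. split; [|split; [|split; [|split; [|split]]]]; auto.
  - split; auto. split.
    + intros x Hx. apply HfixN. destruct (HPi'r x Hx). apply HkerN; auto.
    + intros x y' Hx Hy'. unfold Pi'. assert (HPx : in_l2 (Pi x)) by (apply bop_l2; auto).
      assert (HPy : in_l2 (Pi y')) by (apply bop_l2; auto).
      rewrite inner_sub_l, inner_scal_l by (auto; apply in_l2_scal; auto).
      rewrite inner_sub_r, inner_scal_r by (auto; apply in_l2_scal; auto).
      rewrite Hadj by auto.
      assert (E1 : Cconj (inner (Pi y') h) = inner h y').
      { rewrite <- inner_sym. rewrite <- Hadj by auto. rewrite HPh. reflexivity. }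
      assert (E2 : inner x h = inner (Pi x) h).
      { rewrite <- HPh at 1. rewrite Hadj by auto. reflexivity. }
      rewrite E1, E2. ring.
  - intros v. split.
    + intros (x & Hx & ->). destruct (HPi'r x Hx). apply HkerN; auto.
    + intros Hv. exists v. split. eapply cs_l2; eauto. symmetry; apply HfixN; auto.
Qed.
End Peel.

Section Core.
Variable Q : operator.
Hypothesis HQ : is_orth_proj Q.
Variable E0 : subspace.
Hypothesis HE0 : is_closed_subspace E0.
Variable eps : R.
Hypothesis Heps : 0 <= eps.
Hypothesis HE0Q : forall v, E0 v -> l2norm (vsub v (Q v)) <= eps * l2norm v.

Definition Concl (Pi : operator) := forall e, eps < e ->
  TB (fun x => vsub (Pi x) (Q (Pi x))) e /\ TB (fun x => Pi (vsub x (Q x))) e.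

Lemma concl_base Pi : is_orth_proj Pi -> (forall v, range Pi v <-> E0 v) -> Concl Pi.
Proof.
  intros HPi Hr e He. pose proof HPi as (HB & Hid & Hadj). pose proof HQ as (HQB & HQid & HQadj). split.
  - apply TB_small with eps; auto. intros x Hx Hx1.
    assert (HE : E0 (Pi x)) by (apply Hr; apply range_of; auto).
    eapply Rle_trans. apply HE0Q; auto. pose proof (proj_norm Pi x HPi Hx).
    pose proof (l2norm_ge0 (Pi x)). nra.
  - apply TB_small with eps; auto. intros x Hx Hx1.
    assert (HxQ : in_l2 (vsub x (Q x))) by (apply in_l2_sub; auto; apply bop_l2; auto).
    set (w := Pi (vsub x (Q x))).
    assert (Hwr : range Pi w) by (apply range_of; auto).
    assert (HE : E0 w) by (apply Hr; auto).
    assert (Hw : in_l2 w) by (apply bop_l2; auto).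
    assert (HQw : in_l2 (Q w)) by (apply bop_l2; auto).
    assert (l2norm w ^ 2 <= l2norm x * (eps * l2norm w)).
    { rewrite <- ip_self by auto. unfold w at 1. rewrite (ip_adj Pi Pi) by auto.
      rewrite (range_fix Pi w HPi Hwr). rewrite ip_sub_l by (auto; apply bop_l2; auto).
      rewrite (ip_adj Q Q) by auto. rewrite <- ip_sub_r by auto.
      eapply Rle_trans. apply ip_cs; auto. apply in_l2_sub; auto.
      apply Rmult_le_compat_l. apply l2norm_ge0. apply HE0Q; auto. }
    pose proof (l2norm_ge0 w) as Hw0. pose proof (l2norm_ge0 x) as Hx0.
    assert (H2 : l2norm x * (eps * l2norm w) <= eps * l2norm w).
    { rewrite <- (Rmult_1_l (eps * l2norm w)) at 2. apply Rmult_le_compat_r; auto. apply Rmult_le_pos; auto. }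
    change (l2norm w <= eps). 
    destruct (Rle_dec (l2norm w) eps) as [|Hn]; auto. exfalso.
    assert (l2norm w * l2norm w > eps * l2norm w) by (apply Rmult_lt_compat_r; lra).
    simpl in H. lra.
Qed.

Lemma concl_transfer Pi Pi' h : is_orth_proj Pi -> is_orth_proj Pi' -> in_l2 h -> l2norm h = 1 -> Pi h = h ->
  (forall x, in_l2 x -> Pi' x = vsub (Pi x) (vscal (inner (Pi x) h) h)) -> Concl Pi' -> Concl Pi.
Proof.
  intros HPi HPi' Hh Hh1 HPh HPi'e HC e He.
  pose proof HPi as (HB & Hid & Hadj). pose proof HPi' as (HB' & Hid' & Hadj'). pose proof HQ as (HQB & HQid & HQadj).
  set (e1 := (e + eps) / 2). set (e2 := (e - eps) / 2).
  assert (He1 : eps < e1) by (unfold e1; lra). assert (He2 : 0 < e2) by (unfold e2; lra).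
  assert (Hee : e = e1 + e2) by (unfold e1, e2; field).
  destruct (HC e1 He1) as (HA & HB2).
  assert (HQh : in_l2 (Q h)) by (apply bop_l2; auto).
  split.
  - rewrite Hee.
    apply TB_ext with (fun x => vadd (vsub (Pi' x) (Q (Pi' x))) (vscal (inner (Pi x) h) (vsub h (Q h)))).
    + intros x Hx. assert (HPx : in_l2 (Pi x)) by (apply bop_l2; auto).
      rewrite HPi'e by auto. rewrite (bop_sub Q), (bop_scal Q) by (auto; apply in_l2_scal; auto).
      vext. ring.
    + apply TB_add; auto.
      * intros x Hx. apply in_l2_sub; apply bop_l2; auto; apply bop_l2; auto.
      * intros x Hx. apply in_l2_scal. apply in_l2_sub; auto.
      * apply (TB_rank1 (fun x => inner (Pi x) h) (vsub h (Q h)) 1); auto. apply in_l2_sub; auto. lra.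
        intros x Hx Hx1. assert (HPx : in_l2 (Pi x)) by (apply bop_l2; auto).
        pose proof (inner_re_bound _ _ HPx Hh). pose proof (inner_im_bound _ _ HPx Hh).
        pose proof (proj_norm Pi x HPi Hx). rewrite Hh1 in *. split; lra.
  - rewrite Hee.
    apply TB_ext with (fun x => vadd (Pi' (vsub x (Q x))) (vscal (inner (Pi (vsub x (Q x))) h) h)).
    + intros x Hx. assert (HxQ : in_l2 (vsub x (Q x))) by (apply in_l2_sub; auto; apply bop_l2; auto).
      rewrite HPi'e by auto. vext. ring.
    + apply TB_add; auto.
      * intros x Hx. apply bop_l2; auto. apply in_l2_sub; auto; apply bop_l2; auto.
      * intros x Hx. apply in_l2_scal; auto.
      * apply (TB_rank1 (fun x => inner (Pi (vsub x (Q x))) h) h 2); auto. lra.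
        intros x Hx Hx1. assert (HxQ : in_l2 (vsub x (Q x))) by (apply in_l2_sub; auto; apply bop_l2; auto).
        assert (HPx : in_l2 (Pi (vsub x (Q x)))) by (apply bop_l2; auto).
        pose proof (inner_re_bound _ _ HPx Hh). pose proof (inner_im_bound _ _ HPx Hh).
        pose proof (proj_norm Pi _ HPi HxQ). pose proof (l2tri_sub x (Q x) Hx ltac:(apply bop_l2; auto)).
        pose proof (proj_norm Q x HQ Hx). rewrite Hh1 in *. split; lra.
Qed.

Lemma core l : (forall u, In u l -> in_l2 u) -> forall Pi, is_orth_proj Pi ->
  (forall v, range Pi v <-> Sp E0 l v) -> Concl Pi.
Proof.
  induction l as [|z l' IH]; intros Hl Pi HPi Hr.
  - apply concl_base; auto.
  - assert (Hl' : forall u, In u l' -> in_l2 u) by (intros; apply Hl; right; auto).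
    assert (Hz : in_l2 z) by (apply Hl; left; auto).
    assert (HN : is_closed_subspace (Sp E0 l')) by (apply Sp_closed; auto).
    destruct (classic (Sp E0 l' z)) as [Hzin | Hzout].
    + apply IH; auto. intros v. rewrite Hr. simpl. split.
      * intros (c & Hc). replace v with (vadd (vsub v (vscal c z)) (vscal c z)) by (vext; ring).
        apply cs_add; auto. apply cs_scal; auto.
      * intros Hv. exists (RtoC 0). rewrite vsub_scal0; auto.
    + destruct (peel Pi HPi (Sp E0 l') HN z Hz Hzout Hr) as (Pi' & h & HPi' & Hr' & Hh & Hh1 & HPh & HPi'e).
      apply (concl_transfer Pi Pi' h); auto.
Qed.
End Core.

Lemma near_point Q u w : is_orth_proj Q -> in_l2 u -> range Q w -> l2norm (vsub u (Q u)) <= l2norm (vsub u w).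
Proof.
  intros HQ Hu Hw. pose proof HQ as (HB & Hid & Hadj).
  assert (Hwl : in_l2 w) by (apply (range_l2 Q); auto).
  assert (HQw : Q w = w) by (apply range_fix; auto).
  assert (HQu : in_l2 (Q u)) by (apply bop_l2; auto).
  assert (E : vsub u w = vadd (vsub u (Q u)) (vsub (Q u) w)) by (vext; ring).
  assert (E2 : vsub (Q u) w = Q (vsub u w)) by (rewrite bop_sub, HQw; auto).
  assert (Hip : ip (vsub u (Q u)) (vsub (Q u) w) = 0).
  { rewrite E2. rewrite <- (ip_adj Q Q) by (auto; apply in_l2_sub; auto).
    rewrite bop_sub, Hid, vsub_self by auto. apply ip_zero_l. apply in_l2_sub; auto. }
  apply sq_le_nonneg. apply l2norm_ge0. apply l2norm_ge0.
  rewrite E, l2norm_add_sq by (apply in_l2_sub; auto). rewrite Hip.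
  pose proof (pow2_ge_0 (l2norm (vsub (Q u) w))). lra.
Qed.

Lemma E0_Q_bound Q E0 (eps : R) : is_orth_proj Q -> is_closed_subspace E0 ->
  (forall v, E0 v -> l2norm v = 1 -> Rbar_le (Defs.dist v (range Q)) eps) ->
  forall v, E0 v -> l2norm (vsub v (Q v)) <= eps * l2norm v.
Proof.
  intros HQ HE0 Hunit v Hv. pose proof HQ as (HB & Hid & Hadj).
  assert (Hvl : in_l2 v) by (eapply cs_l2; eauto).
  destruct (l2norm_ge0 v) as [Hpos | Hz].
  - set (u := vscal (RtoC (/ l2norm v)) v).
    assert (Hu : E0 u) by (apply cs_scal; auto).
    assert (Hul : in_l2 u) by (apply in_l2_scal; auto).
    assert (Hu1 : l2norm u = 1).
    { unfold u. rewrite l2norm_scal, Cmod_R, Rabs_pos_eq by (auto; left; apply Rinv_0_lt_compat; auto). field. lra. }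
    assert (Hd : l2norm (vsub u (Q u)) <= eps).
    { specialize (Hunit u Hu Hu1).
      destruct (Glb_Rbar_correct (fun r => exists w, range Q w /\ r = l2norm (vsub u w))) as [_ Hglb].
      assert (Hlb : Rbar_le (l2norm (vsub u (Q u))) (Defs.dist u (range Q))).
      { apply Hglb. intros r (w & Hw & ->). simpl. apply near_point; auto. }
      pose proof (Rbar_le_trans _ _ (Finite eps) Hlb Hunit). simpl in H. auto. }
    assert (E : vsub v (Q v) = vscal (RtoC (l2norm v)) (vsub u (Q u))).
    { unfold u. rewrite (bop_scal Q) by auto. vext. unfold RtoC. destruct (v x), (Q v x). unfold Cmult, Cminus, Cplus, Copp; simpl.
      f_equal; field; lra. }
    rewrite E, l2norm_scal, Cmod_R, Rabs_pos_eq by (auto; try lra; apply in_l2_sub; auto; apply bop_l2; auto).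
    rewrite (Rmult_comm eps). apply Rmult_le_compat_l; lra.
  - symmetry in Hz. apply l2norm_zero in Hz; auto. subst v. rewrite bop_zero, vsub_self, l2norm_vzero by auto. lra.
Qed.

Lemma backward (P Q : operator) : is_orth_proj P -> is_orth_proj Q ->
  ess_contained (range P) (range Q) -> calkin_le P Q.
Proof.
  intros HP HQ Hess. pose proof HP as (HPB & HPid & HPadj). pose proof HQ as (HQB & HQid & HQadj).
  set (Cop := fun x => vsub (Q x) (P x)).
  assert (HC : is_bounded_op Cop) by (apply (bop_vsub Q P); auto).
  set (K := fun x => vsub (Cop x) (Cop (Cop x))).
  exists Cop, Cop, K. split; [|split; [|split; [|split]]]; auto.
  - intros x y Hx Hy. unfold Cop. rewrite inner_sub_l, inner_sub_r by (auto; apply bop_l2; auto).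
    rewrite HQadj, HPadj by auto. reflexivity.
  - split.
    + apply (bop_vsub Cop (fun x => Cop (Cop x))); auto. apply bop_comp; auto.
    + intros eta Heta.
      set (eps := eta / 4).
      assert (Heps : 0 < eps) by (unfold eps; lra).
      destruct (Hess eps Heps) as (E0 & HE0 & HE0P & (l & Hl & Hd) & Hunit).
      pose proof (E0_Q_bound Q E0 eps HQ HE0 Hunit) as HE0Q.
      assert (Hll2 : forall u, In u l -> in_l2 u) by (intros u Hu; apply (range_l2 P); auto).
      assert (Hr : forall v, range P v <-> Sp E0 l v).
      { intros v. split.
        - apply codim_Sp; auto.
        - apply Sp_sub; auto. intros; apply range_add; auto. intros; apply range_scal; auto. }
      destruct (core Q HQ E0 HE0 eps ltac:(lra) HE0Q l Hll2 P HP Hr (eta / 2) ltac:(unfold eps; lra)) as (HA & HB).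
      assert (HAB := TB_add _ _ _ _ 
        (fun x Hx => in_l2_sub _ _ (bop_l2 P x HPB Hx) (bop_l2 Q _ HQB (bop_l2 P x HPB Hx)))
        (fun x Hx => bop_l2 P _ HPB (in_l2_sub _ _ Hx (bop_l2 Q x HQB Hx))) HA HB).
      replace (eta / 2 + eta / 2) with eta in HAB by field.
      apply TB_neg in HAB.
      * apply TB_ext with (2 := HAB). intros x Hx.
        unfold K, Cop. assert (HPx : in_l2 (P x)) by (apply bop_l2; auto). assert (HQx : in_l2 (Q x)) by (apply bop_l2; auto).
        rewrite !(bop_sub Q) by auto. rewrite !(bop_sub P) by auto. rewrite !HQid, !HPid by auto.
        vext. ring.
      * intros x Hx. apply in_l2_add. apply in_l2_sub; apply bop_l2; auto; apply bop_l2; auto.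
        apply bop_l2; auto. apply in_l2_sub; auto; apply bop_l2; auto.
  - intros x Hx. unfold K, Cop. vext. ring.
Qed.

Theorem proposition3p3 (P Q : operator) :
  is_orth_proj P -> is_orth_proj Q ->
  (calkin_le P Q <-> ess_contained (range P) (range Q)).
Proof.
  intros HP HQ. split. apply forward; auto. apply backward; auto.
Qed.
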